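(* Let $k\in\{1,2\}$, $\beta\in\mathbb{R}\setminus\{0\}$, and for $h>0$ let $u^h$ be the solution of $$\frac{d}{dt}u^h_j + D_+D_0D_-u^h_j + \beta\frac{k+1}{k+2}\Big[(u^h_j)^k D_0u^h_j + D_0\big((u^h)^{k+1}\big)_j\Big] + h\,(D_+D_-D_+D_-u^h)_j=0,\quad j\in\mathbb{Z},\qquad u^h(0)=\varphi=\varphi^h,$$ with real-valued initial datum $\varphi\in\ell^2_h(\mathbb{Z})$. Then for each $T>0$ and each $R>0$ there exists a constant $C=C(R,T,\|\varphi\|_{2,h})$ such that for all $h>0$ $$\int_0^T\sum_{|jh|\le R}h\,|D_\pm u^h_j(t)|^2\,dt\le C.$$
   Context: $x_j=jh$; $\ell^2_h(\mathbb{Z})$ is the space of sequences with $\|z\|_{2,h}^2=\sum_j h|z_j|^2<\infty$. $D_+u_j=(u_{j+1}-u_j)/h$, $D_-u_j=(u_j-u_{j-1})/h$, $D_0u_j=(u_{j+1}-u_{j-1})/(2h)$; powers of sequences are componentwise. The estimate holds for both choices of sign in $D_\pm$. *)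

(* Defs.v *)
From Stdlib Require Import Reals ZArith.
From Coquelicot Require Import Coquelicot.
Open Scope R_scope.

Definition gridfun := Z -> R.

(* Enumerate Z as n |-> n (n >= 0) and n |-> -(n+1): the sum over Z of a
   nonnegative family a is the series of a n + a (-(n+1)). *)
Definition zpos (n : nat) : Z := Z.of_nat n.
Definition zneg (n : nat) : Z := (- (Z.of_nat n) - 1)%Z.

Definition is_l2 (h : R) (z : gridfun) : Prop :=
  ex_series (fun n => h * (z (zpos n))^2 + h * (z (zneg n))^2).

Definition l2norm (h : R) (z : gridfun) : R :=
  sqrt (Series (fun n => h * (z (zpos n))^2 + h * (z (zneg n))^2)).

Definition Dp (h : R) (z : gridfun) : gridfun := fun j => (z (j + 1)%Z - z j) / h.
Definition Dm (h : R) (z : gridfun) : gridfun := fun j => (z j - z (j - 1)%Z) / h.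
Definition D0 (h : R) (z : gridfun) : gridfun :=
  fun j => (z (j + 1)%Z - z (j - 1)%Z) / (2 * h).

Definition gpow (z : gridfun) (m : nat) : gridfun := fun j => (z j) ^ m.

Definition Fop (k : nat) (beta h : R) (z : gridfun) : gridfun :=
  fun j =>
    Dp h (D0 h (Dm h z)) j
    + beta * (INR k + 1) / (INR k + 2) * ((z j)^k * D0 h z j + D0 h (gpow z (k+1)) j)
    + h * Dp h (Dm h (Dp h (Dm h z))) j.

(* u : [0,T] -> l^2_h(Z) is a (classical, C^1 in l^2_h) solution on [0,T] with
   time derivative u' and initial datum phi. *)
Definition is_solution (k : nat) (beta h T : R) (phi : gridfun)
  (u u' : R -> gridfun) : Prop :=
  u 0 = phi /\
  (forall t, 0 <= t <= T -> is_l2 h (u t) /\ is_l2 h (u' t)) /\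
  (forall t, 0 <= t <= T ->
     filterlim (fun s => l2norm h (fun j => (u (t + s) j - u t j) / s - u' t j))
       (within (fun s => s <> 0 /\ 0 <= t + s <= T) (locally 0)) (locally 0)) /\
  (forall t, 0 <= t <= T ->
     filterlim (fun s => l2norm h (fun j => u' (t + s) j - u' t j))
       (within (fun s => 0 <= t + s <= T) (locally 0)) (locally 0)) /\
  (forall t, 0 <= t <= T -> forall j : Z, u' t j + Fop k beta h (u t) j = 0).

(* Local sum  sum_{|jh| <= R} h |w_j|^2  (finitely many j; |j| < up (R/h)) *)
Definition local_sum (h Rr : R) (w : gridfun) : R :=
  sum_f_R0 (fun n =>
     (if Rle_dec (Rabs (IZR (zpos n) * h)) Rr then h * (w (zpos n))^2 else 0)
   + (if Rle_dec (Rabs (IZR (zneg n) * h)) Rr then h * (w (zneg n))^2 else 0))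
   (Z.to_nat (up (Rr / h))).

(* Main.v *)
Require Import Defs.
From Stdlib Require Import Reals ZArith Lra Lia Psatz FunctionalExtensionality.
From Coquelicot Require Import Coquelicot.
Open Scope R_scope.

Ltac zn := unfold Z.sub; repeat rewrite <- Z.add_assoc; simpl Z.add.

Definition Floc (k : nat) (beta h um2 um1 u0 u1 u2 : R) : R :=
  (u2 - 2*u1 + 2*um1 - um2)/(2*h^3)
  + beta*(INR k+1)/(INR k+2)*( u0^k*(u1-um1)/(2*h) + (u1*u1^k - um1*um1^k)/(2*h))
  + h*((u2 - 4*u1 + 6*u0 - 4*um1 + um2)/h^4).

Lemma Fop_loc k beta h z j : h <> 0 ->
  Fop k beta h z j = Floc k beta h (z (j + -2)%Z) (z (j + -1)%Z) (z j) (z (j+1)%Z) (z (j+2)%Z).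
Proof.
  intro Hh. unfold Fop, Floc, Dp, Dm, D0, gpow. zn.
  rewrite Nat.add_1_r. simpl pow.
  rewrite !Z.add_0_r.
  assert (INR k + 2 <> 0) by (pose proof (pos_INR k); lra).
  field. auto.
Qed.

Definition Qp (h cm2 cm1 c0 c1 c2 um1 u0 u1 : R) : R :=
  let am2 := cm1 - cm2 in let am1 := c0 - cm1 in let a0 := c1 - c0 in let a1 := c2 - c1 in
  let e0 := u1 - u0 in let em1 := u0 - um1 in let f := u1 - 2*u0 + um1 in
  /2*(am1+a0+a1)*e0^2 - /4*(am1+a0)*f^2 + c0*f^2 + (a0*(e0+em1) + (a0-am1)*um1)*f
  + /4*u0^2*(a0+am1-am2-a1) + 4*h^2*(e0^2+em1^2) + 8*h^2*u0*f.

Definition XL (h cm2 cm1 c0 c1 um2 um1 u0 u1 : R) : R :=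
  /4*cm2*u0^2 - 3*cm1*um1*u0 + 3/2*cm1*um1*u1 + 5/4*cm1*um1^2 - /2*c0*um2*u0
  + c0*um1*u0 - 3/4*c0*u0^2 + c1*um1*u0 - /4*c1*um1^2 - /2*c1*u0^2
  + 4*h^2*um1^2 - 4*h^2*u0^2.

Definition XN (k : nat) (c0 um1 u0 : R) : R := /2*c0*um1*u0*(u0^k + um1^k).
Definition QN (k : nat) (c0 c1 u0 u1 : R) : R := - /2*(c1-c0)*u0*u1*(u0^k+u1^k).

Lemma key_id k beta h cm2 cm1 c0 c1 c2 um2 um1 u0 u1 u2 : h <> 0 ->
  h*c0*u0*Floc k beta h um2 um1 u0 u1 u2 =
  Qp h cm2 cm1 c0 c1 c2 um1 u0 u1 / h^2
  + beta*(INR k+1)/(INR k+2) * QN k c0 c1 u0 u1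
  + (XL h cm1 c0 c1 c2 um1 u0 u1 u2 - XL h cm2 cm1 c0 c1 um2 um1 u0 u1)/h^2
  + beta*(INR k+1)/(INR k+2) * (XN k c1 u0 u1 - XN k c0 um1 u0).
Proof.
  intro Hh. unfold Floc, Qp, XL, XN, QN.
  assert (INR k + 2 <> 0) by (pose proof (pos_INR k); lra).
  field. auto.
Qed.

Lemma Qp_lower_aux h c0 am2 am1 a0 a1 um1 u0 e0 em1 f :
  0 < h -> h <= 1 -> 1 <= c0 ->
  0 <= am2 <= h -> 0 <= am1 <= h -> 0 <= a0 <= h -> 0 <= a1 <= h ->
  (a0 - am1)^2 <= 4*h^4 ->
  a0 + am1 - am2 - a1 >= - 6*h^3 ->
  /2*(am1+a0+a1)*e0^2 - /4*(am1+a0)*f^2 + c0*f^2 + (a0*(e0+em1) + (a0-am1)*um1)*f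
  + /4*u0^2*(a0+am1-am2-a1) + 4*h^2*(e0^2+em1^2) + 8*h^2*u0*f >=
  /2*(am1+a0+a1)*e0^2 - 8*h^3*um1^2 - 130*h^3*u0^2.
Proof.
  intros h0 h1 Hc Ham2 Ham1 Ha0 Ha1 Hd Ht.
  assert (Ea : a0^2 <= h^2) by nra.
  assert (Ee : 0 <= (e0-em1)^2) by apply pow2_ge_0.
  assert (Ee2 : (e0+em1)^2 <= 2*(e0^2+em1^2)) by nra.
  assert (Ee3 : 0 <= (e0+em1)^2) by apply pow2_ge_0.
  assert (Eb : (a0*(e0+em1))^2 <= 2*h^2*(e0^2+em1^2)).
  { replace ((a0*(e0+em1))^2) with (a0^2*(e0+em1)^2) by ring.
    apply Rle_trans with (h^2*(e0+em1)^2).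
    - apply Rmult_le_compat_r; auto.
    - nra. }
  assert (H1 : (a0*(e0+em1))*f >= -(f^2/8 + 4*h^2*(e0^2+em1^2))).
  { assert (0 <= (f/2 + 2*(a0*(e0+em1)))^2) by apply pow2_ge_0. nra. }
  assert (H2 : ((a0-am1)*um1)*f >= -(f^2/8 + 8*h^4*um1^2)).
  { assert (0 <= (f/2 + 2*((a0-am1)*um1))^2) by apply pow2_ge_0.
    assert (((a0-am1)*um1)^2 <= 4*h^4*um1^2).
    { replace (((a0-am1)*um1)^2) with ((a0-am1)^2*um1^2) by ring.
      apply Rmult_le_compat_r; auto. apply pow2_ge_0. }
    nra. }
  assert (H3 : 8*h^2*u0*f >= -(f^2/8 + 128*h^4*u0^2)).
  { assert (0 <= (f/2 + 16*h^2*u0)^2) by apply pow2_ge_0. nra. }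
  assert (Ef : 0 <= f^2) by apply pow2_ge_0.
  assert (H4 : - /4*(am1+a0)*f^2 + c0*f^2 >= /2*f^2).
  { assert ((am1+a0) <= 2) by lra.
    assert (/4*(am1+a0)*f^2 <= /2 * f^2) by nra. nra. }
  assert (Eu0 : 0 <= u0^2) by apply pow2_ge_0.
  assert (Eum1 : 0 <= um1^2) by apply pow2_ge_0.
  assert (H5 : /4*u0^2*(a0+am1-am2-a1) >= - 6/4*h^3*u0^2) by nra.
  assert (Eh : h^4 <= h^3).
  { replace (h^4) with (h*h^3) by ring. assert (0 <= h^3) by (apply pow_le; lra). nra. }
  assert (h^4*um1^2 <= h^3*um1^2) by (apply Rmult_le_compat_r; auto).
  assert (h^4*u0^2 <= h^3*u0^2) by (apply Rmult_le_compat_r; auto).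
  nra.
Qed.

Lemma Qp_lower h cm2 cm1 c0 c1 c2 um1 u0 u1 :
  0 < h -> h <= 1 -> 1 <= c0 ->
  0 <= cm1 - cm2 <= h -> 0 <= c0 - cm1 <= h -> 0 <= c1 - c0 <= h -> 0 <= c2 - c1 <= h ->
  Rabs ((c1 - c0) - (c0 - cm1)) <= 2*h^2 ->
  (c1-c0) + (c0-cm1) - (cm1-cm2) - (c2-c1) >= - 6*h^3 ->
  Qp h cm2 cm1 c0 c1 c2 um1 u0 u1 >=
  /2*((c0-cm1)+(c1-c0)+(c2-c1))*(u1-u0)^2 - 8*h^3*um1^2 - 130*h^3*u0^2.
Proof.
  intros h0 h1 Hc Ham2 Ham1 Ha0 Ha1 Hd Ht.
  unfold Qp. cbv zeta.
  apply Qp_lower_aux; auto.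
  replace (4*h^4) with ((2*h^2)^2) by ring.
  apply pow_maj_Rabs. auto.
Qed.

Lemma abs_half x : Rabs x <= /2*(1 + x^2).
Proof.
  assert (0 <= (Rabs x - 1)^2) by apply pow2_ge_0.
  assert (Rabs x ^2 = x^2) by (rewrite RPow_abs; apply Rabs_right; apply Rle_ge, pow2_ge_0).
  nra.
Qed.

Lemma QN_bound k h g c0 c1 u0 u1 Lam :
  (k = 1%nat \/ k = 2%nat) -> 0 < h -> 0 <= g <= 1 -> c1 - c0 = h * g^2 ->
  (g*u0)^2 <= Lam -> (g*u1)^2 <= Lam ->
  Rabs (QN k c0 c1 u0 u1) <= /2*h*(1+Lam)*(u0^2+u1^2).
Proof.
  intros Hk h0 Hg Hc Hx Hy. unfold QN. rewrite Hc.
  assert (Hp : Rabs (u0*u1) <= /2*(u0^2+u1^2)).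
  { assert (0 <= (u0+u1)^2) by apply pow2_ge_0.
    assert (0 <= (u0-u1)^2) by apply pow2_ge_0.
    apply Rabs_le. split; nra. }
  assert (0 <= Lam) by (assert (0 <= (g*u0)^2) by apply pow2_ge_0; lra).
  assert (Hq : 0 <= u0^2+u1^2) by (assert (0 <= u0^2) by apply pow2_ge_0;
     assert (0 <= u1^2) by apply pow2_ge_0; lra).
  assert (Ha : 0 <= Rabs (u0*u1)) by apply Rabs_pos.
  destruct Hk as [-> | ->].
  -
    replace (- /2*(h*g^2)*u0*u1*(u0^1+u1^1)) with
      (-(/2*h)*((g*u0 + g*u1) * g * (u0*u1))) by ring.
    rewrite Rabs_mult, Rabs_Ropp, (Rabs_right (/2*h)) by lra.
    rewrite Rabs_mult, Rabs_mult.
    rewrite (Rabs_right g) by lra.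
    assert (H1 : Rabs (g*u0+g*u1) <= 1 + Lam).
    { eapply Rle_trans. apply Rabs_triang.
      pose proof (abs_half (g*u0)). pose proof (abs_half (g*u1)). lra. }
    assert (0 <= Rabs (g*u0+g*u1)) by apply Rabs_pos.
    assert (Rabs (g * u0 + g * u1) * g * Rabs (u0 * u1) <= (1+Lam) * (/2*(u0^2+u1^2))).
    { apply Rle_trans with (Rabs (g * u0 + g * u1) * 1 * Rabs (u0 * u1)).
      - apply Rmult_le_compat_r; auto. apply Rmult_le_compat_l; lra.
      - rewrite Rmult_1_r. apply Rmult_le_compat; lra. }
    apply Rle_trans with (/2*h*((1+Lam)*(/2*(u0^2+u1^2)))).
    + apply Rmult_le_compat_l; [lra|]. lra.
    + assert (0 <= (1+Lam)*(u0^2+u1^2)) by (apply Rmult_le_pos; lra). nra.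
  - replace (- /2*(h*g^2)*u0*u1*(u0^2+u1^2)) with
      (-(/2*h)*(((g*u0)^2 + (g*u1)^2) * (u0*u1))) by ring.
    rewrite Rabs_mult, Rabs_Ropp, (Rabs_right (/2*h)) by lra.
    rewrite Rabs_mult.
    rewrite (Rabs_right ((g*u0)^2 + (g*u1)^2)) by (apply Rle_ge;
      assert (0 <= (g*u0)^2) by apply pow2_ge_0; assert (0 <= (g*u1)^2) by apply pow2_ge_0; lra).
    assert (((g * u0) ^ 2 + (g * u1) ^ 2) * Rabs (u0 * u1) <= (2*Lam) * (/2*(u0^2+u1^2))).
    { apply Rmult_le_compat; try lra.
      assert (0 <= (g*u0)^2) by apply pow2_ge_0; assert (0 <= (g*u1)^2) by apply pow2_ge_0; lra. }
    nra.
Qed.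

Fixpoint sZ (lo : Z) (n : nat) (f : Z -> R) : R :=
  match n with O => 0 | S m => sZ lo m f + f (lo + Z.of_nat m)%Z end.

Lemma sZ_ext lo n f g : (forall j, (lo <= j < lo + Z.of_nat n)%Z -> f j = g j) ->
  sZ lo n f = sZ lo n g.
Proof.
  induction n; intros H; simpl; auto.
  rewrite IHn. rewrite H. auto. lia. intros j Hj; apply H; lia.
Qed.

Lemma sZ_le lo n f g : (forall j, (lo <= j < lo + Z.of_nat n)%Z -> f j <= g j) ->
  sZ lo n f <= sZ lo n g.
Proof.
  induction n; intros H; simpl. lra.
  apply Rplus_le_compat. apply IHn. intros j Hj; apply H; lia. apply H; lia.
Qed.

Lemma sZ_nonneg lo n f : (forall j, (lo <= j < lo + Z.of_nat n)%Z -> 0 <= f j) ->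
  0 <= sZ lo n f.
Proof.
  intros H. replace 0 with (sZ lo n (fun _ => 0)). apply sZ_le; auto.
  induction n; simpl; auto. rewrite IHn. lra. intros j Hj; apply H; lia.
Qed.

Lemma sZ_zero lo n : sZ lo n (fun _ => 0) = 0.
Proof. induction n; simpl; auto. rewrite IHn; lra. Qed.

Lemma sZ_plus lo n f g : sZ lo n (fun j => f j + g j) = sZ lo n f + sZ lo n g.
Proof. induction n; simpl; auto. lra. rewrite IHn; lra. Qed.

Lemma sZ_minus lo n f g : sZ lo n (fun j => f j - g j) = sZ lo n f - sZ lo n g.
Proof. induction n; simpl; auto. lra. rewrite IHn; lra. Qed.

Lemma sZ_scal lo n a f : sZ lo n (fun j => a * f j) = a * sZ lo n f.
Proof. induction n; simpl; auto. lra. rewrite IHn; lra. Qed.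

Lemma sZ_tele lo n X : sZ lo n (fun j => X (j+1)%Z - X j) = X (lo + Z.of_nat n)%Z - X lo.
Proof.
  induction n. simpl. rewrite Z.add_0_r; lra.
  cbn [sZ]. rewrite IHn. rewrite Nat2Z.inj_succ. replace (lo + Z.succ (Z.of_nat n))%Z with (lo + Z.of_nat n + 1)%Z by lia.
  lra.
Qed.

Lemma sZ_split lo n m f : sZ lo (n + m) f = sZ lo n f + sZ (lo + Z.of_nat n) m f.
Proof.
  induction m. simpl. rewrite Nat.add_0_r; lra.
  rewrite Nat.add_succ_r. cbn [sZ]. rewrite IHm.
  replace (lo + Z.of_nat (n + m))%Z with (lo + Z.of_nat n + Z.of_nat m)%Z by lia. lra.
Qed.

Lemma sZ_cons lo n f : sZ lo (S n) f = f lo + sZ (lo + 1) n f.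
Proof.
  replace (S n) with (1 + n)%nat by lia. rewrite sZ_split. simpl. rewrite Z.add_0_r. lra.
Qed.

Lemma sZ_shift lo n s f : sZ lo n (fun j => f (j + s)%Z) = sZ (lo + s) n f.
Proof.
  induction n; simpl; auto. rewrite IHn. f_equal. f_equal. lia.
Qed.

Lemma sZ_one lo f : sZ lo 1 f = f lo.
Proof. simpl. rewrite Z.add_0_r. lra. Qed.

Lemma sZ_window f N : sum_f_R0 (fun n => f (zpos n) + f (zneg n)) N =
  sZ (- Z.of_nat N - 1) (2 * N + 2) f.
Proof.
  induction N.
  - simpl. unfold zpos, zneg. simpl. lra.
  - change (sum_f_R0 (fun n => f (zpos n) + f (zneg n)) (S N)) with
      (sum_f_R0 (fun n => f (zpos n) + f (zneg n)) N + (f (zpos (S N)) + f (zneg (S N)))).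
    rewrite IHN.
    replace (2 * S N + 2)%nat with (S ((2 * N + 2) + 1)) by lia.
    rewrite sZ_cons. rewrite (sZ_split _ (2*N+2) 1). rewrite sZ_one.
    replace (- Z.of_nat (S N) - 1 + 1)%Z with (- Z.of_nat N - 1)%Z by lia.
    unfold zpos, zneg.
    replace (- Z.of_nat N - 1 + Z.of_nat (2 * N + 2))%Z with (Z.of_nat (S N)) by lia.
    lra.
Qed.

Lemma sZ_sub_le lo n lo' n' f :
  (forall j, 0 <= f j) -> (lo' <= lo)%Z -> (lo + Z.of_nat n <= lo' + Z.of_nat n')%Z ->
  sZ lo n f <= sZ lo' n' f.
Proof.
  intros Hf H1 H2.
  set (d1 := Z.to_nat (lo - lo')).
  set (d2 := (n' - d1 - n)%nat).
  assert (Hn' : n' = (d1 + n + d2)%nat) by (unfold d2, d1; lia).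
  rewrite Hn'. rewrite (sZ_split lo' (d1+n) d2), (sZ_split lo' d1 n).
  replace (lo' + Z.of_nat d1)%Z with lo by (unfold d1; lia).
  assert (0 <= sZ lo' d1 f) by (apply sZ_nonneg; auto).
  assert (0 <= sZ (lo' + Z.of_nat (d1 + n)) d2 f) by (apply sZ_nonneg; auto).
  lra.
Qed.

Lemma sZ_abs lo n f : Rabs (sZ lo n f) <= sZ lo n (fun j => Rabs (f j)).
Proof.
  induction n; simpl. rewrite Rabs_R0; lra.
  eapply Rle_trans. apply Rabs_triang. lra.
Qed.

Lemma sZ_CS lo n x y :
  (sZ lo n (fun j => x j * y j))^2 <= sZ lo n (fun j => x j ^ 2) * sZ lo n (fun j => y j ^ 2).
Proof.
  set (A := sZ lo n (fun j => x j ^ 2)). set (B := sZ lo n (fun j => y j ^ 2)).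
  set (Cc := sZ lo n (fun j => x j * y j)).
  assert (HA : 0 <= A) by (apply sZ_nonneg; intros; apply pow2_ge_0).
  assert (HB : 0 <= B) by (apply sZ_nonneg; intros; apply pow2_ge_0).
  assert (Hq : forall t, 0 <= A - 2*t*Cc + t^2 * B).
  { intro t. replace (A - 2*t*Cc + t^2*B) with (sZ lo n (fun j => (x j - t * y j)^2)).
    apply sZ_nonneg; intros; apply pow2_ge_0.
    unfold A, B, Cc. rewrite <- sZ_scal, <- sZ_scal.
    rewrite <- sZ_minus, <- sZ_plus. apply sZ_ext. intros; ring. }
  destruct (Req_dec B 0) as [HB0|HB0].
  - assert (Cc = 0).
    { destruct (Req_dec Cc 0); auto. 
      specialize (Hq ((A+1)/(2*Cc))). rewrite HB0 in Hq.
      replace (A - 2 * ((A + 1) / (2 * Cc)) * Cc + ((A + 1) / (2 * Cc)) ^ 2 * 0) with (-1) in Hq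
        by (field; auto). lra. }
    rewrite H, HB0. lra.
  - specialize (Hq (Cc / B)).
    assert (0 < B) by lra.
    replace (A - 2 * (Cc / B) * Cc + (Cc / B) ^ 2 * B) with (A - Cc^2/B) in Hq by (field; lra).
    assert (Cc^2/B <= A) by lra.
    apply Rmult_le_compat_r with (r := B) in H0; [|lra].
    replace (Cc^2/B*B) with (Cc^2) in H0 by (field; lra). lra.
Qed.

Lemma sZ_const lo n a : sZ lo n (fun _ => a) = INR n * a.
Proof. induction n. simpl; lra. cbn [sZ]. rewrite IHn, S_INR. lra. Qed.

Lemma sZ_avg lo m f C : (0 < m)%nat -> sZ lo m f <= C ->
  exists j, (lo <= j < lo + Z.of_nat m)%Z /\ f j <= C / INR m.
Proof.
  intros Hm H.
  destruct (Classical_Prop.classic (exists j, (lo <= j < lo + Z.of_nat m)%Z /\ f j <= C / INR m)) as [E|E]; auto.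
  exfalso.
  assert (Hlt : forall j, (lo <= j < lo + Z.of_nat m)%Z -> C / INR m < f j).
  { intros j Hj. apply Rnot_le_lt. intro. apply E. exists j. auto. }
  assert (HINR : 0 < INR m) by (apply lt_0_INR; lia).
  assert (H1 : sZ lo m (fun _ => C / INR m) < sZ lo m f).
  { destruct m. lia. cbn [sZ]. apply Rplus_le_lt_compat.
    apply sZ_le. intros j Hj. left. apply Hlt. lia. apply Hlt. lia. }
  rewrite sZ_const in H1. replace (INR m * (C / INR m)) with C in H1 by (field; lra). lra.
Qed.

Lemma ballR x e y : ball x e y <-> Rabs (y - x) < e.
Proof. reflexivity. Qed.

Lemma filterlim_within_eps (f : R -> R) (D : R -> Prop) :
  filterlim f (within D (locally 0)) (locally 0) ->
  forall eps, 0 < eps -> exists del, 0 < del /\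
    forall s, Rabs s < del -> D s -> Rabs (f s) < eps.
Proof.
  intros Hf eps He.
  apply filterlim_locally with (eps := mkposreal eps He) in Hf.
  destruct Hf as [d Hd]. exists d. split. apply cond_pos.
  intros s Hs HD. specialize (Hd s). simpl in Hd.
  assert (H : ball 0 d s) by (apply ballR; rewrite Rminus_0_r; auto).
  specialize (Hd H HD). apply ballR in Hd. replace (f s) with (f s - 0) by ring. auto.
Qed.

Lemma partial_le_series (a : nat -> R) N : (forall n, 0 <= a n) -> ex_series a ->
  sum_f_R0 a N <= Series a.
Proof.
  intros Ha He.
  assert (Hs := Series_correct a He).
  assert (Hl : is_lim_seq (sum_n a) (Series a)) by exact Hs.
  assert (H := is_lim_seq_le_loc (fun _ => sum_n a N) (sum_n a) (sum_n a N) (Series a)).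
  rewrite <- sum_n_Reals.
  simpl in H. apply H; auto. 2: apply is_lim_seq_const.
  exists N. intros n Hn. rewrite !sum_n_Reals.
  induction n. replace N with 0%nat by lia. lra.
  destruct (Nat.eq_dec N (S n)). subst; lra.
  simpl. assert (IH := IHn ltac:(lia)). specialize (Ha (S n)). lra.
Qed.

Definition l2t (h : R) (z : gridfun) (n : nat) : R := h * (z (zpos n))^2 + h * (z (zneg n))^2.

Lemma l2t_nonneg h z n : 0 <= h -> 0 <= l2t h z n.
Proof. intros. unfold l2t. assert (0 <= z (zpos n)^2) by apply pow2_ge_0.
  assert (0 <= z (zneg n)^2) by apply pow2_ge_0. nra. Qed.

Lemma window_le_series h z lo n : 0 <= h -> is_l2 h z ->
  sZ lo n (fun j => h * z j ^ 2) <= Series (l2t h z).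
Proof.
  intros Hh Hz.
  set (N := Z.to_nat (Z.abs lo + Z.of_nat n)).
  apply Rle_trans with (sZ (- Z.of_nat N - 1) (2 * N + 2) (fun j => h * z j ^ 2)).
  - apply sZ_sub_le. intros; assert (0 <= z j^2) by apply pow2_ge_0; nra.
    unfold N; lia. unfold N; lia.
  - rewrite <- sZ_window. apply (partial_le_series (l2t h z)).
    intros; apply l2t_nonneg; auto. exact Hz.
Qed.

Lemma series_nonneg h z : 0 <= h -> is_l2 h z -> 0 <= Series (l2t h z).
Proof.
  intros Hh Hz. eapply Rle_trans. 2: apply (window_le_series h z 0 0); auto.
  simpl; lra.
Qed.

Lemma l2norm_sq h z : 0 <= h -> is_l2 h z -> l2norm h z ^ 2 = Series (l2t h z).
Proof.
  intros Hh Hz. unfold l2norm. fold (l2t h z). simpl. rewrite Rmult_1_r.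
  apply sqrt_sqrt. apply series_nonneg; auto.
Qed.

Lemma coord_le h z j : 0 <= h -> is_l2 h z -> h * z j ^ 2 <= Series (l2t h z).
Proof.
  intros Hh Hz. eapply Rle_trans. 2: apply (window_le_series h z j 1); auto.
  simpl. rewrite Z.add_0_r. lra.
Qed.

Lemma is_l2_comb h x y w a b c : 0 <= h -> is_l2 h x -> is_l2 h y -> is_l2 h w ->
  is_l2 h (fun j => a * x j + b * y j + c * w j).
Proof.
  intros Hh Hx Hy Hw. unfold is_l2.
  apply (ex_series_le (V := R_CompleteNormedModule) _ (fun n => 3*a^2 * l2t h x n + 3*b^2 * l2t h y n + 3*c^2 * l2t h w n)).
  - intros n. match goal with |- norm ?X <= _ => change (norm X) with (Rabs X) end.
    rewrite Rabs_right.
    2: { apply Rle_ge. fold (l2t h (fun j => a * x j + b * y j + c * w j) n). apply l2t_nonneg; auto. }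
    unfold l2t.
    assert (forall p q r : R, (a*p+b*q+c*r)^2 <= 3*a^2*p^2 + 3*b^2*q^2 + 3*c^2*r^2).
    { intros p q r. assert (0 <= (a*p-b*q)^2) by apply pow2_ge_0.
      assert (0 <= (a*p-c*r)^2) by apply pow2_ge_0. assert (0 <= (b*q-c*r)^2) by apply pow2_ge_0.
      nra. }
    pose proof (H (x (zpos n)) (y (zpos n)) (w (zpos n))).
    pose proof (H (x (zneg n)) (y (zneg n)) (w (zneg n))). nra.
  - apply (ex_series_plus (V := R_NormedModule)). apply (ex_series_plus (V := R_NormedModule)).
    + apply (ex_series_scal (V := R_NormedModule) (3*a^2)); exact Hx.
    + apply (ex_series_scal (V := R_NormedModule) (3*b^2)); exact Hy.
    + apply (ex_series_scal (V := R_NormedModule) (3*c^2)); exact Hw.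
Qed.

From Stdlib Require Import FunctionalExtensionality.

Lemma comp_deriv k beta h T phi u u' : 0 < h -> is_solution k beta h T phi u u' ->
  forall t, 0 <= t <= T -> forall j eps, 0 < eps -> exists del, 0 < del /\
  forall s, Rabs s < del -> s <> 0 -> 0 <= t + s <= T ->
    Rabs ((u (t+s) j - u t j)/s - u' t j) < eps.
Proof.
  intros Hh [H0 [Hl2 [Hd [Hc Heq]]]] t Ht j eps He.
  assert (Hsh : 0 < sqrt h) by (apply sqrt_lt_R0; auto).
  destruct (filterlim_within_eps _ _ (Hd t Ht) (eps * sqrt h)) as [del [Hdel Hs]].
  { apply Rmult_lt_0_compat; auto. }
  exists del. split; auto. intros s Hsd Hs0 Hts.
  specialize (Hs s Hsd (conj Hs0 Hts)).
  set (q := fun j0 => (u (t + s) j0 - u t j0) / s - u' t j0) in *.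
  assert (Hq : q = fun j0 => (/s) * u (t+s) j0 + (-/s) * u t j0 + (-1) * u' t j0).
  { apply functional_extensionality. intro. unfold q. field. auto. }
  assert (Hql2 : is_l2 h q).
  { rewrite Hq. apply is_l2_comb; try lra. apply Hl2; auto. apply Hl2; auto. apply Hl2; auto. }
  assert (Hn : 0 <= l2norm h q) by (unfold l2norm; apply sqrt_pos).
  rewrite Rabs_right in Hs by lra.
  assert (Hsq : l2norm h q ^ 2 < (eps * sqrt h)^2).
  { assert (0 <= eps*sqrt h) by (apply Rmult_le_pos; lra). nra. }
  rewrite l2norm_sq in Hsq by (auto; lra).
  replace ((eps * sqrt h)^2) with (eps^2 * h) in Hsq
    by (assert (Hs2 := sqrt_sqrt h ltac:(lra)); simpl; rewrite !Rmult_1_r; nra).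
  assert (Hc1 := coord_le h q j ltac:(lra) Hql2).
  assert (Hqj : q j ^2 < eps^2) by nra.
  fold (q j). assert (Hqq : Rsqr (q j) < Rsqr eps) by (unfold Rsqr; simpl in Hqj; lra).
  apply Rsqr_lt_abs_0 in Hqq. rewrite (Rabs_right eps) in Hqq by lra. auto.
Qed.

Definition clamp (T t : R) : R := Rmax 0 (Rmin T t).

Lemma clamp_in T t : 0 <= T -> 0 <= clamp T t <= T.
Proof. intros. unfold clamp, Rmax, Rmin. repeat destruct Rle_dec; lra. Qed.

Lemma clamp_id T t : 0 <= t <= T -> clamp T t = t.
Proof. intros. unfold clamp, Rmax, Rmin. repeat destruct Rle_dec; lra. Qed.

Lemma clamp_lip T x y : 0 <= T -> Rabs (clamp T y - clamp T x) <= Rabs (y - x).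
Proof.
  intros. unfold clamp, Rmax, Rmin. repeat destruct Rle_dec;
  repeat match goal with |- context [Rabs ?z] => destruct (Rabs_dec z) end; 
  try (apply Rabs_le; split; lra);
  try (unfold Rabs; repeat destruct Rcase_abs; lra).
Qed.

Lemma local_lip k beta h T phi u u' : 0 < h -> is_solution k beta h T phi u u' ->
  forall t, 0 <= t <= T -> forall j, exists del, 0 < del /\
  forall s, Rabs s < del -> 0 <= t + s <= T ->
    Rabs (u (t+s) j - u t j) <= Rabs s * (1 + Rabs (u' t j)).
Proof.
  intros Hh Hsol t Ht j.
  destruct (comp_deriv k beta h T phi u u' Hh Hsol t Ht j 1 ltac:(lra)) as [del [Hdel Hs]].
  exists del. split; auto. intros s Hsd Hts.
  destruct (Req_dec s 0) as [->|Hs0].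
  - rewrite Rplus_0_r, Rminus_diag_eq, Rabs_R0 by auto. pose proof (Rabs_pos (u' t j)). lra.
  - specialize (Hs s Hsd Hs0 Hts).
    replace (u (t+s) j - u t j) with (s * ((u (t + s) j - u t j) / s - u' t j + u' t j)) by (field; auto).
    rewrite Rabs_mult. apply Rmult_le_compat_l. apply Rabs_pos.
    eapply Rle_trans. apply Rabs_triang. lra.
Qed.

Lemma clamp_cont k beta h T phi u u' : 0 < h -> 0 < T -> is_solution k beta h T phi u u' ->
  forall j x, continuity_pt (fun t => u (clamp T t) j) x.
Proof.
  intros Hh HT Hsol j x.
  set (t0 := clamp T x).
  assert (Ht0 : 0 <= t0 <= T) by (apply clamp_in; lra).
  destruct (local_lip k beta h T phi u u' Hh Hsol t0 Ht0 j) as [del [Hdel Hl]].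
  unfold continuity_pt, continue_in, limit1_in, limit_in. intros eps Heps.
  set (K := 1 + Rabs (u' t0 j)).
  assert (HK : 0 < K) by (unfold K; pose proof (Rabs_pos (u' t0 j)); lra).
  exists (Rmin del (eps / K)). split.
  { apply Rmin_pos; auto. apply Rdiv_lt_0_compat; auto. }
  intros y [_ Hy]. simpl in *. unfold R_dist in *.
  set (s := clamp T y - t0).
  assert (Hs : Rabs s <= Rabs (y - x)) by (apply clamp_lip; lra).
  assert (Hyc : clamp T y = t0 + s) by (unfold s; ring).
  rewrite Hyc. fold t0.
  assert (Hsd : Rabs s < del) by (pose proof (Rmin_l del (eps/K)); lra).
  assert (Hts : 0 <= t0 + s <= T) by (rewrite <- Hyc; apply clamp_in; lra).
  specialize (Hl s Hsd Hts). fold K in Hl.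
  assert (Rabs s < eps / K) by (pose proof (Rmin_r del (eps/K)); lra).
  apply Rle_lt_trans with (Rabs s * K); auto.
  apply Rmult_lt_reg_r with (/K). apply Rinv_0_lt_compat; auto.
  replace (Rabs s * K * / K) with (Rabs s) by (field; lra). auto.
Qed.

Lemma clamp_deriv k beta h T phi u u' : 0 < h -> is_solution k beta h T phi u u' ->
  forall j x, 0 < x < T -> derivable_pt_lim (fun t => u (clamp T t) j) x (u' x j).
Proof.
  intros Hh Hsol j x Hx eps Heps.
  destruct (comp_deriv k beta h T phi u u' Hh Hsol x ltac:(lra) j eps Heps) as [del [Hdel Hs]].
  assert (Hp : 0 < Rmin del (Rmin x (T - x))) by (repeat apply Rmin_pos; lra).
  exists (mkposreal _ Hp). intros s Hs0 Hsd. simpl in Hsd.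
  pose proof (Rmin_l del (Rmin x (T-x))). pose proof (Rmin_r del (Rmin x (T-x))).
  pose proof (Rmin_l x (T-x)). pose proof (Rmin_r x (T-x)).
  assert (Hts : 0 <= x + s <= T) by (apply Rabs_def2 in Hsd; lra).
  rewrite !clamp_id by lra.
  apply Hs; auto; lra.
Qed.

Lemma q_small k beta h T phi u u' : 0 < h -> is_solution k beta h T phi u u' ->
  forall t, 0 <= t <= T -> exists del, 0 < del /\
  forall s, Rabs s < del -> s <> 0 -> 0 <= t + s <= T -> forall lo n,
    sZ lo n (fun j => h * ((u (t+s) j - u t j)/s - u' t j)^2) <= 1.
Proof.
  intros Hh [H0 [Hl2 [Hd [Hc Heq]]]] t Ht.
  destruct (filterlim_within_eps _ _ (Hd t Ht) 1) as [del [Hdel Hs]]. lra.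
  exists del. split; auto. intros s Hsd Hs0 Hts lo n.
  specialize (Hs s Hsd (conj Hs0 Hts)).
  set (q := fun j0 => (u (t + s) j0 - u t j0) / s - u' t j0) in *.
  assert (Hq : q = fun j0 => (/s) * u (t+s) j0 + (-/s) * u t j0 + (-1) * u' t j0).
  { apply functional_extensionality. intro. unfold q. field. auto. }
  assert (Hql2 : is_l2 h q).
  { rewrite Hq. apply is_l2_comb; try lra. apply Hl2; auto. apply Hl2; auto. apply Hl2; auto. }
  assert (Hn : 0 <= l2norm h q) by (unfold l2norm; apply sqrt_pos).
  rewrite Rabs_right in Hs by lra.
  assert (Hsq : l2norm h q ^ 2 < 1) by nra.
  rewrite l2norm_sq in Hsq by (auto; lra).
  eapply Rle_trans. apply (window_le_series h q lo n); auto; lra. lra.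
Qed.

Lemma local_window_bound k beta h T phi u u' : 0 < h -> is_solution k beta h T phi u u' ->
  forall t, 0 <= t <= T -> exists del K, 0 < del /\
  forall s, 0 <= s <= T -> Rabs (s - t) < del -> forall lo n,
    sZ lo n (fun j => h * u s j ^ 2) <= K.
Proof.
  intros Hh Hsol t Ht.
  destruct (q_small k beta h T phi u u' Hh Hsol t Ht) as [del [Hdel Hq]].
  destruct Hsol as [H0 [Hl2 _]].
  set (d := Rmin del 1).
  assert (Hd : 0 < d) by (apply Rmin_pos; lra).
  exists d, (3 * Series (l2t h (u t)) + 3 + 3 * Series (l2t h (u' t))).
  split; auto. intros s Hs Hst lo n.
  assert (Hdd : d <= 1) by apply Rmin_r. assert (Hdd2 : d <= del) by apply Rmin_l.
  assert (HS1 := window_le_series h (u t) lo n ltac:(lra) (proj1 (Hl2 t Ht))).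
  assert (HS2 := window_le_series h (u' t) lo n ltac:(lra) (proj2 (Hl2 t Ht))).
  destruct (Req_dec s t) as [->|Hne].
  - assert (0 <= Series (l2t h (u' t))) by (apply series_nonneg; [lra | apply Hl2; auto]).
    assert (0 <= Series (l2t h (u t))) by (apply series_nonneg; [lra | apply Hl2; auto]). lra.
  - set (r := s - t).
    assert (Hr0 : r <> 0) by (unfold r; lra).
    assert (Hrs : s = t + r) by (unfold r; ring).
    rewrite Hrs.
    specialize (Hq r ltac:(unfold r in *; lra) Hr0 ltac:(lra) lo n).
    set (q := fun j => (u (t + r) j - u t j) / r - u' t j) in *.
    assert (Hr2 : r^2 <= 1).
    { assert (Rabs r < 1) by (unfold r; lra). 
      assert (Rsqr r < Rsqr 1) by (apply Rsqr_lt_abs_1; rewrite Rabs_R1; lra).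
      unfold Rsqr in *; simpl; lra. }
    apply Rle_trans with (sZ lo n (fun j => 3 * (h * u t j ^ 2) + 3 * (h * q j ^ 2) + 3 * (h * u' t j ^2))).
    + apply sZ_le. intros j _.
      replace (u (t + r) j) with (u t j + r * q j + r * u' t j) by (unfold q; field; auto).
      assert (0 <= (u t j - r * q j)^2) by apply pow2_ge_0.
      assert (0 <= (u t j - r * u' t j)^2) by apply pow2_ge_0.
      assert (0 <= (r * q j - r * u' t j)^2) by apply pow2_ge_0.
      assert (0 <= q j ^2) by apply pow2_ge_0. assert (0 <= u' t j ^2) by apply pow2_ge_0.
      assert (r^2 * q j^2 <= q j^2) by nra. assert (r^2 * u' t j^2 <= u' t j^2) by nra.
      nra.
    + rewrite !sZ_plus, (sZ_scal lo n 3), (sZ_scal lo n 3), (sZ_scal lo n 3). assert (Hq2 : sZ lo n (fun j => h * q j ^ 2) <= 1) by exact Hq. lra.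
Qed.

Lemma unif_bound k beta h T phi u u' : 0 < h -> 0 < T -> is_solution k beta h T phi u u' ->
  exists K, forall t, 0 <= t <= T -> forall lo n, sZ lo n (fun j => h * u t j ^ 2) <= K.
Proof.
  intros Hh HT Hsol.
  set (P := fun x => exists K, forall t, 0 <= t <= x -> forall lo n, sZ lo n (fun j => h * u t j ^ 2) <= K).
  set (E := fun x => 0 <= x <= T /\ P x).
  assert (HE0 : E 0).
  { split. lra. destruct (local_window_bound k beta h T phi u u' Hh Hsol 0 ltac:(lra)) as [d [K [Hd HK]]].
    exists K. intros t Ht lo n. apply HK. lra. replace (t - 0) with 0 by lra. rewrite Rabs_R0; auto. }
  assert (Hb : bound E) by (exists T; intros x [Hx _]; lra).
  destruct (completeness E Hb (ex_intro _ 0 HE0)) as [S [HS1 HS2]].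
  assert (HS0 : 0 <= S) by (apply HS1; auto).
  assert (HST : S <= T) by (apply HS2; intros x [Hx _]; lra).
  destruct (local_window_bound k beta h T phi u u' Hh Hsol S ltac:(lra)) as [d [KS [Hd HKS]]].
  assert (Hx : exists x, E x /\ S - d < x).
  { apply Classical_Prop.NNPP. intro Hn.
    assert (S <= S - d); [|lra].
    apply HS2. intros x Ex. apply Rnot_lt_le. intro. apply Hn. exists x; auto. }
  destruct Hx as [x [[Hx1 [Kx HKx]] Hxd]].
  set (y := Rmin T (S + d/2)).
  assert (Py : P y).
  { exists (Rmax Kx KS). intros t Ht lo n.
    destruct (Rle_dec t x).
    - eapply Rle_trans. apply HKx. lra. apply Rmax_l.
    - eapply Rle_trans. apply HKS. unfold y in Ht; pose proof (Rmin_l T (S+d/2)); lra.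
      unfold y in Ht; pose proof (Rmin_r T (S+d/2)); apply Rabs_def1; lra. apply Rmax_r. }
  assert (Ey : E y) by (split; auto; unfold y; pose proof (Rmin_l T (S+d/2));
     split; [apply Rmin_glb; lra | lra]).
  assert (Hy : y <= S) by (apply HS1; auto).
  assert (HyT : y = T).
  { unfold y in *. unfold Rmin in *. destruct Rle_dec; lra. }
  rewrite HyT in Py. destruct Py as [K HK]. exists K. auto.
Qed.

Lemma cont_to_C f x : continuity_pt f x -> continuous f x.
Proof. intro H. apply continuity_pt_filterlim. auto. Qed.
Lemma C_to_cont f x : continuous f x -> continuity_pt f x.
Proof. intro H. apply continuity_pt_filterlim. auto. Qed.

Lemma sZ_cont lo n (F : R -> Z -> R) x :
  (forall j, continuity_pt (fun t => F t j) x) -> continuity_pt (fun t => sZ lo n (F t)) x.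
Proof.
  intros H. induction n; simpl.
  - apply continuity_pt_const. intros a b; auto.
  - apply (continuity_pt_plus (fun t => sZ lo n (F t)) (fun t => F t (lo + Z.of_nat n)%Z)); auto.
Qed.

Lemma sZ_deriv lo n (F dF : R -> Z -> R) x :
  (forall j, derivable_pt_lim (fun t => F t j) x (dF x j)) ->
  derivable_pt_lim (fun t => sZ lo n (F t)) x (sZ lo n (dF x)).
Proof.
  intros H. induction n; simpl.
  - apply derivable_pt_lim_const.
  - apply (derivable_pt_lim_plus (fun t => sZ lo n (F t)) (fun t => F t (lo + Z.of_nat n)%Z)); auto.
Qed.

Lemma RInt_cont_ex (G : R -> R) a b : (forall x, continuity_pt G x) -> ex_RInt G a b.
Proof. intros H. apply (ex_RInt_continuous (V := R_CompleteNormedModule)). intros; apply cont_to_C; auto. Qed.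

Lemma time_identity (v w : R -> Z -> R) (a : Z -> R) (G : R -> R) lo n T :
  0 < T ->
  (forall j x, continuity_pt (fun t => v t j) x) ->
  (forall j x, 0 < x < T -> derivable_pt_lim (fun t => v t j) x (w x j)) ->
  (forall x, continuity_pt G x) ->
  (forall x, 0 < x < T -> sZ lo n (fun j => a j * (2 * v x j * w x j)) = -2 * G x) ->
  sZ lo n (fun j => a j * v T j ^ 2) - sZ lo n (fun j => a j * v 0 j ^ 2) = -2 * RInt G 0 T.
Proof.
  intros HT Hv Hd HG Hid.
  set (I := fun t => RInt G 0 t).
  assert (HI : forall x, is_derive I x (G x)).
  { intro x. apply (is_derive_RInt G I 0 x).
    - exists (mkposreal 1 Rlt_0_1). intros y _. apply (RInt_correct (V := R_CompleteNormedModule)). apply RInt_cont_ex; auto.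
    - apply cont_to_C; auto. }
  set (Phi := fun t => sZ lo n (fun j => a j * v t j ^ 2) + 2 * I t).
  destruct (MVT_gen Phi 0 T (fun _ => 0)) as [c [Hc Hmvt]].
  - intros x Hx. rewrite Rmin_left, Rmax_right in Hx by lra.
    apply is_derive_Reals.
    replace 0 with (sZ lo n (fun j => a j * (2 * v x j * w x j)) + 2 * G x) by (rewrite Hid; auto; ring).
    apply (derivable_pt_lim_plus (fun t => sZ lo n (fun j => a j * v t j ^ 2)) (fun t => 2 * I t)).
    + apply (sZ_deriv lo n (fun t j => a j * v t j ^ 2) (fun x j => a j * (2 * v x j * w x j))).
      intro j. apply (derivable_pt_lim_scal (fun t => v t j ^ 2) (a j)).
      apply is_derive_Reals.
      replace (2 * v x j * w x j) with (INR 2 * w x j * v x j ^ Nat.pred 2) by (simpl; ring).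
      apply (is_derive_pow (fun t => v t j)). apply is_derive_Reals. auto.
    + apply (derivable_pt_lim_scal I 2). apply is_derive_Reals. auto.
  - intros x _. apply (continuity_pt_plus (fun t => sZ lo n (fun j => a j * v t j ^ 2)) (fun t => 2 * I t)).
    + apply (sZ_cont lo n (fun t j => a j * v t j ^ 2)). intro j.
      apply (continuity_pt_scal (fun t => v t j ^ 2) (a j)).
      apply (continuity_pt_mult (fun t => v t j) (fun t => v t j ^ 1)); auto.
      apply (continuity_pt_mult (fun t => v t j) (fun t => 1)); auto. apply continuity_pt_const. intros ? ?; auto.
    + apply (continuity_pt_scal I 2). apply C_to_cont. apply (ex_derive_continuous (K := R_AbsRing) (V := R_NormedModule) I x). exists (G x). auto.
  - unfold Phi, I in *. rewrite RInt_point in Hmvt.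
    change (@zero R_CompleteNormedModule) with 0 in Hmvt. lra.
Qed.

Definition mfun (rho x : R) : R := Rmin 1 (rho - Rabs x).
Definition gfun (rho x : R) : R := Rmax 0 (mfun rho x).

Lemma gfun_bounds rho x : 0 <= gfun rho x <= 1.
Proof. unfold gfun, mfun, Rmax, Rmin. repeat destruct Rle_dec; lra. Qed.

Lemma gfun_one rho x : Rabs x <= rho - 1 -> gfun rho x = 1.
Proof. intros. unfold gfun, mfun, Rmax, Rmin. repeat destruct Rle_dec; lra. Qed.

Lemma gfun_zero rho x : rho <= Rabs x -> gfun rho x = 0.
Proof. intros. unfold gfun, mfun, Rmax, Rmin. repeat destruct Rle_dec; lra. Qed.

Ltac abs_elim := repeat match goal with |- context [Rabs ?z] =>
  let H := fresh in destruct (Rle_lt_dec 0 z) as [H|H];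
  [rewrite (Rabs_right z) by lra | rewrite (Rabs_left z) by lra] end.
Ltac abs_cases := abs_elim; repeat destruct Rle_dec; try lra.

Lemma mfun_lip rho x y : Rabs (mfun rho y - mfun rho x) <= Rabs (y - x).
Proof.
  unfold mfun, Rmin. abs_cases.
Qed.

Lemma gfun_lip rho x y : Rabs (gfun rho y - gfun rho x) <= Rabs (y - x).
Proof.
  eapply Rle_trans. 2: apply (mfun_lip rho x y).
  unfold gfun. set (a := mfun rho x). set (b := mfun rho y). unfold Rmax.
  abs_cases.
Qed.

Lemma mfun_concave rho x h : 0 < h ->
  mfun rho (x+h) - mfun rho x <= mfun rho (x-h) - mfun rho (x - 2*h).
Proof.
  intros Hh. unfold mfun, Rmin. abs_cases.
Qed.

Definition phi2 (y : R) := Rmax 0 y ^ 2.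

Lemma phi2_up a b : phi2 b - phi2 a <= 2 * Rmax 0 b * (b - a).
Proof. unfold phi2, Rmax. assert (0 <= (b-a)^2) by apply pow2_ge_0.
  repeat destruct Rle_dec; nra. Qed.

Lemma phi2_lo a b : phi2 b - phi2 a >= 2 * Rmax 0 a * (b - a).
Proof. unfold phi2, Rmax. assert (0 <= (b-a)^2) by apply pow2_ge_0.
  repeat destruct Rle_dec; nra. Qed.

Lemma gfun_sq rho x : gfun rho x ^ 2 = phi2 (mfun rho x).
Proof. reflexivity. Qed.

Lemma gfun_third rho x h : 0 < h ->
  gfun rho (x+h)^2 - gfun rho x^2 - gfun rho (x-h)^2 + gfun rho (x-2*h)^2 <= 6 * h^2.
Proof.
  intros Hh. rewrite !gfun_sq.
  set (m1 := mfun rho (x+h)). set (m0 := mfun rho x). set (mm1 := mfun rho (x-h)).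
  set (mm2 := mfun rho (x-2*h)).
  assert (Hc : m1 - m0 <= mm1 - mm2) by (apply mfun_concave; auto).
  assert (Hd2 : Rabs (mm1 - mm2) <= h).
  { eapply Rle_trans. apply mfun_lip. replace (x - h - (x - 2*h)) with h by ring. rewrite Rabs_right; lra. }
  assert (H13 : Rabs (m1 - mm2) <= 3*h).
  { eapply Rle_trans. apply mfun_lip. replace (x + h - (x - 2*h)) with (3*h) by ring. rewrite Rabs_right; lra. }
  pose proof (phi2_up m0 m1). pose proof (phi2_lo mm2 mm1).
  assert (Hp1 : 0 <= Rmax 0 m1) by apply Rmax_l.
  assert (Hpl : Rabs (Rmax 0 m1 - Rmax 0 mm2) <= Rabs (m1 - mm2)).
  { unfold Rmax. abs_cases. }
  assert (Step : 2 * Rmax 0 m1 * (m1 - m0) <= 2 * Rmax 0 m1 * (mm1 - mm2)) by nra.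
  assert (Hprod : (Rmax 0 m1 - Rmax 0 mm2) * (mm1 - mm2) <= 3*h*h).
  { eapply Rle_trans. apply Rle_abs. rewrite Rabs_mult.
    apply Rmult_le_compat; try apply Rabs_pos. lra. lra. }
  nra.
Qed.

Definition gj (rho h : R) (j : Z) : R := gfun rho (IZR j * h).
Definition n0 (rho h : R) : nat := Z.to_nat (up (rho / h)).
Definition lo0 (rho h : R) : Z := (- Z.of_nat (n0 rho h))%Z.
Definition psi (rho h : R) (j : Z) : R :=
  1 + sZ (lo0 rho h) (Z.to_nat (j - lo0 rho h)) (fun i => h * gj rho h i ^ 2).

Lemma n0_bounds rho h : 0 < rho -> 0 < h ->
  rho <= INR (n0 rho h) * h <= rho + h.
Proof.
  intros Hr Hh. unfold n0.
  destruct (archimed (rho / h)) as [A1 A2].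
  assert (Hup : (0 < up (rho / h))%Z).
  { apply lt_IZR. assert (0 < rho / h) by (apply Rdiv_lt_0_compat; auto). lra. }
  rewrite INR_IZR_INZ. rewrite Z2Nat.id by lia.
  split.
  - apply Rmult_le_reg_r with (/h). apply Rinv_0_lt_compat; auto.
    rewrite Rmult_assoc, Rinv_r, Rmult_1_r by lra. unfold Rdiv in A1. lra.
  - apply Rmult_le_reg_r with (/h). apply Rinv_0_lt_compat; auto.
    rewrite Rmult_assoc, Rinv_r, Rmult_1_r by lra.
    replace ((rho + h) * / h) with (rho / h + 1) by (field; lra). lra.
Qed.

Lemma gj_zero rho h j : 0 < rho -> 0 < h ->
  ((j <= lo0 rho h)%Z \/ (Z.of_nat (n0 rho h) <= j)%Z) -> gj rho h j = 0.
Proof.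
  intros Hr Hh Hj. unfold gj. apply gfun_zero.
  destruct (n0_bounds rho h Hr Hh) as [B1 B2].
  rewrite INR_IZR_INZ in B1.
  unfold lo0 in Hj. destruct Hj as [Hj|Hj].
  - apply IZR_le in Hj. rewrite opp_IZR in Hj.
    rewrite Rabs_left1. 2: { assert (IZR j * h <= 0) by nra. lra. }
    nra.
  - apply IZR_le in Hj. rewrite Rabs_right by nra. nra.
Qed.

Lemma psi_diff rho h j : 0 < rho -> 0 < h ->
  psi rho h (j+1) - psi rho h j = h * gj rho h j ^ 2.
Proof.
  intros Hr Hh. unfold psi.
  destruct (Z_le_gt_dec (lo0 rho h) j) as [Hj|Hj].
  - replace (Z.to_nat (j + 1 - lo0 rho h)) with (S (Z.to_nat (j - lo0 rho h))) by lia.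
    cbn [sZ]. replace (lo0 rho h + Z.of_nat (Z.to_nat (j - lo0 rho h)))%Z with j by lia. ring.
  - replace (Z.to_nat (j + 1 - lo0 rho h)) with 0%nat by lia.
    replace (Z.to_nat (j - lo0 rho h)) with 0%nat by lia.
    rewrite gj_zero by (auto; lia). simpl. ring.
Qed.

Lemma sZ_gj_bound rho h m : 0 < rho -> 0 < h ->
  sZ (lo0 rho h) m (fun i => h * gj rho h i ^ 2) <= h * INR (2 * n0 rho h).
Proof.
  intros Hr Hh.
  assert (Hterm : forall i, 0 <= h * gj rho h i ^ 2 <= h).
  { intro i. pose proof (gfun_bounds rho (IZR i * h)). unfold gj. split. 
    apply Rmult_le_pos; [lra|apply pow2_ge_0]. 
    assert (gfun rho (IZR i * h) ^ 2 <= 1) by nra. nra. }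
  destruct (le_lt_dec m (2 * n0 rho h)) as [Hm|Hm].
  - apply Rle_trans with (sZ (lo0 rho h) m (fun _ => h)).
    apply sZ_le; intros; apply Hterm. rewrite sZ_const.
    assert (INR m <= INR (2 * n0 rho h)) by (apply le_INR; auto). nra.
  - replace m with (2 * n0 rho h + (m - 2 * n0 rho h))%nat by lia.
    rewrite sZ_split.
    rewrite (sZ_ext _ (m - 2 * n0 rho h) _ (fun _ => 0)).
    + rewrite sZ_zero. rewrite Rplus_0_r.
      apply Rle_trans with (sZ (lo0 rho h) (2 * n0 rho h) (fun _ => h)).
      apply sZ_le; intros; apply Hterm. rewrite sZ_const. lra.
    + intros j Hj. rewrite gj_zero; auto. ring. right. unfold lo0 in Hj. lia.
Qed.

Lemma psi_bounds rho h j : 0 < rho -> 0 < h -> h <= 1 ->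
  1 <= psi rho h j <= 2 * rho + 3.
Proof.
  intros Hr Hh H1. unfold psi. split.
  - assert (0 <= sZ (lo0 rho h) (Z.to_nat (j - lo0 rho h)) (fun i => h * gj rho h i ^ 2)).
    { apply sZ_nonneg. intros. apply Rmult_le_pos; [lra|apply pow2_ge_0]. } lra.
  - pose proof (sZ_gj_bound rho h (Z.to_nat (j - lo0 rho h)) Hr Hh).
    destruct (n0_bounds rho h Hr Hh). rewrite mult_INR in H. simpl INR in H. nra.
Qed.

Lemma IZR_shift j s h : IZR (j + s) * h = IZR j * h + IZR s * h.
Proof. rewrite plus_IZR. ring. Qed.

Lemma a_bounds rho h j : 0 < rho -> 0 < h ->
  0 <= psi rho h (j+1) - psi rho h j <= h.
Proof.
  intros. rewrite psi_diff by auto. pose proof (gfun_bounds rho (IZR j * h)). unfold gj.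
  split. apply Rmult_le_pos; [lra|apply pow2_ge_0].
  assert (gfun rho (IZR j * h) ^ 2 <= 1) by nra. nra.
Qed.

Lemma gj_lip rho h j : 0 < h -> Rabs (gj rho h (j+1) - gj rho h j) <= h.
Proof.
  intros Hh. unfold gj. eapply Rle_trans. apply gfun_lip. rewrite IZR_shift.
  replace (IZR j * h + IZR 1 * h - IZR j * h) with h by (simpl; ring). rewrite Rabs_right; lra.
Qed.

Lemma a_lip rho h j : 0 < rho -> 0 < h ->
  Rabs ((psi rho h (j+1) - psi rho h j) - (psi rho h j - psi rho h (j + -1))) <= 2 * h^2.
Proof.
  intros Hr Hh. rewrite psi_diff by auto.
  replace j with ((j + -1) + 1)%Z at 2 by ring. rewrite psi_diff by auto.
  replace (j + -1 + 1)%Z with j by ring.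
  pose proof (gj_lip rho h (j + -1) Hh). replace (j + -1 + 1)%Z with j in H by ring.
  pose proof (gfun_bounds rho (IZR j * h)). pose proof (gfun_bounds rho (IZR (j + -1) * h)).
  unfold gj in *.
  set (x := gfun rho (IZR j * h)) in *. set (y := gfun rho (IZR (j + -1) * h)) in *.
  replace (h * x ^ 2 - h * y ^ 2) with (h * ((x - y) * (x + y))) by ring.
  rewrite Rabs_mult, Rabs_mult, (Rabs_right h) by lra.
  rewrite (Rabs_right (x+y)) by lra.
  assert (Rabs (x - y) * (x + y) <= h * 2) by (apply Rmult_le_compat; try lra; apply Rabs_pos).
  nra.
Qed.

Lemma a_third rho h j : 0 < rho -> 0 < h ->
  (psi rho h (j+1) - psi rho h j) + (psi rho h j - psi rho h (j + -1))
  - (psi rho h (j + -1) - psi rho h (j + -2)) - (psi rho h (j + 2) - psi rho h (j+1)) >= - 6 * h^3.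
Proof.
  intros Hr Hh.
  assert (E1 := psi_diff rho h j Hr Hh). assert (E2 := psi_diff rho h (j + -1) Hr Hh).
  assert (E3 := psi_diff rho h (j + -2) Hr Hh). assert (E4 := psi_diff rho h (j + 1) Hr Hh).
  replace (j + -1 + 1)%Z with j in E2 by ring. replace (j + -2 + 1)%Z with (j + -1)%Z in E3 by ring.
  replace (j + 1 + 1)%Z with (j + 2)%Z in E4 by ring.
  rewrite E1, E2, E3, E4.
  unfold gj. rewrite !IZR_shift.
  replace (IZR (-1)) with (-1) by reflexivity. replace (IZR (-2)) with (-2) by reflexivity.
  replace (IZR 1) with 1 by reflexivity.
  pose proof (gfun_third rho (IZR j * h) h Hh).
  replace (IZR j * h + -1 * h) with (IZR j * h - h) by ring.
  replace (IZR j * h + -2 * h) with (IZR j * h - 2 * h) by ring.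
  replace (IZR j * h + 1 * h) with (IZR j * h + h) by ring.
  nra.
Qed.

Definition XLj (h : R) (c z : Z -> R) (j : Z) : R :=
  XL h (c (j + -2)%Z) (c (j + -1)%Z) (c j) (c (j+1)%Z) (z (j + -2)%Z) (z (j + -1)%Z) (z j) (z (j+1)%Z).
Definition XNj (k : nat) (c z : Z -> R) (j : Z) : R := XN k (c j) (z (j + -1)%Z) (z j).
Definition Qpj (h : R) (c z : Z -> R) (j : Z) : R :=
  Qp h (c (j + -2)%Z) (c (j + -1)%Z) (c j) (c (j+1)%Z) (c (j+2)%Z) (z (j + -1)%Z) (z j) (z (j+1)%Z).
Definition QNj (k : nat) (c z : Z -> R) (j : Z) : R := QN k (c j) (c (j+1)%Z) (z j) (z (j+1)%Z).

Lemma key_id_j k beta h c z j : h <> 0 ->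
  h * c j * z j * Fop k beta h z j =
  Qpj h c z j / h^2 + beta*(INR k+1)/(INR k+2) * QNj k c z j
  + (XLj h c z (j+1) - XLj h c z j)/h^2
  + beta*(INR k+1)/(INR k+2) * (XNj k c z (j+1) - XNj k c z j).
Proof.
  intros Hh. rewrite Fop_loc by auto.
  unfold Qpj, QNj, XLj, XNj.
  replace (j + 1 + -2)%Z with (j + -1)%Z by ring.
  replace (j + 1 + -1)%Z with j by ring.
  replace (j + 1 + 1)%Z with (j + 2)%Z by ring.
  rewrite (key_id k beta h (c (j + -2)%Z) (c (j + -1)%Z) (c j) (c (j+1)%Z) (c (j+2)%Z)) by auto. ring.
Qed.

Lemma sum_identity k beta h c z lo n : h <> 0 ->
  sZ lo n (fun j => h * c j * z j * Fop k beta h z j) =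
  sZ lo n (fun j => Qpj h c z j / h^2 + beta*(INR k+1)/(INR k+2) * QNj k c z j)
  + (XLj h c z (lo + Z.of_nat n) - XLj h c z lo)/h^2
  + beta*(INR k+1)/(INR k+2) * (XNj k c z (lo + Z.of_nat n) - XNj k c z lo).
Proof.
  intros Hh. assert (INR k + 2 <> 0) by (pose proof (pos_INR k); lra).
  rewrite (sZ_ext lo n _ (fun j => (Qpj h c z j / h^2 + beta*(INR k+1)/(INR k+2) * QNj k c z j)
    + (/h^2) * (XLj h c z (j+1) - XLj h c z j)
    + (beta*(INR k+1)/(INR k+2)) * (XNj k c z (j+1) - XNj k c z j))).
  2: { intros j _. rewrite key_id_j by auto. field; auto. }
  rewrite !sZ_plus, !sZ_scal, !sZ_tele. field. auto.
Qed.

Section PerTime.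
Variables (k : nat) (beta h rho M : R) (z : Z -> R).
Hypotheses (Hk : k = 1%nat \/ k = 2%nat) (Hh : 0 < h) (Hh1 : h <= 1) (Hr : 0 < rho) (HM : 0 <= M)
  (HL2 : forall lo n, sZ lo n (fun j => h * z j ^ 2) <= M^2).

Let c := psi rho h.

Lemma Qpj_lower j : Qpj h c z j / h^2 >=
  /2 * (h * gj rho h (j+1) ^ 2 * Dp h z j ^ 2) - 8 * (h * z (j + -1)%Z ^ 2) - 130 * (h * z j ^ 2).
Proof.
  unfold Qpj, c.
  assert (A1 := a_bounds rho h (j + -2) Hr Hh). replace (j + -2 + 1)%Z with (j + -1)%Z in A1 by ring.
  assert (A2 := a_bounds rho h (j + -1) Hr Hh). replace (j + -1 + 1)%Z with j in A2 by ring.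
  assert (A3 := a_bounds rho h j Hr Hh).
  assert (A4 := a_bounds rho h (j+1) Hr Hh). replace (j + 1 + 1)%Z with (j + 2)%Z in A4 by ring.
  assert (Hpsi := psi_bounds rho h j Hr Hh Hh1).
  assert (HL := Qp_lower h (psi rho h (j + -2)) (psi rho h (j + -1)) (psi rho h j) (psi rho h (j+1))
    (psi rho h (j+2)) (z (j + -1)%Z) (z j) (z (j+1)%Z) Hh Hh1 (proj1 Hpsi) A1 A2 A3 A4
    (a_lip rho h j Hr Hh) (a_third rho h j Hr Hh)).
  assert (E4 := psi_diff rho h (j+1) Hr Hh). replace (j + 1 + 1)%Z with (j + 2)%Z in E4 by ring.
  assert (Hh2 : 0 < h^2) by (apply pow_lt; auto).
  apply Rmult_ge_compat_r with (r := /h^2) in HL; [|left; apply Rinv_0_lt_compat; auto].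
  unfold Rdiv. eapply Rge_trans. apply HL.
  unfold Dp.
  set (d := z (j+1)%Z - z j).
  assert (Hd2 : 0 <= d^2) by apply pow2_ge_0.
  set (s := psi rho h j - psi rho h (j + -1) + (psi rho h (j + 1) - psi rho h j) +
         (psi rho h (j + 2) - psi rho h (j + 1))).
  assert (Hs : h * gj rho h (j + 1) ^ 2 <= s) by (unfold s; lra).
  replace ((/ 2 * s * d ^ 2 - 8 * h ^ 3 * z (j + -1)%Z ^ 2 - 130 * h ^ 3 * z j ^ 2) * / h ^ 2)
    with (/2 * s * (d^2 / h^2) - 8 * (h * z (j + -1)%Z ^ 2) - 130 * (h * z j ^ 2)) by (field; lra).
  replace ((d / h)^2) with (d^2/h^2) by (field; lra).
  assert (0 <= d^2/h^2) by (apply Rdiv_le_0_compat; auto).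
  assert (h * gj rho h (j + 1) ^ 2 * (d^2/h^2) <= s * (d^2/h^2)) by (apply Rmult_le_compat_r; auto).
  lra.
Qed.

Let v := fun j => gj rho h j * z j.

Lemma v_sq_le j : v j ^ 2 <= z j ^ 2.
Proof.
  unfold v. pose proof (gfun_bounds rho (IZR j * h)). unfold gj.
  rewrite Rpow_mult_distr. assert (0 <= z j ^ 2) by apply pow2_ge_0.
  assert (gfun rho (IZR j * h) ^ 2 <= 1) by nra. nra.
Qed.

Lemma GN j lo n : (lo <= lo0 rho h)%Z -> (Z.of_nat (n0 rho h) <= lo + Z.of_nat n)%Z ->
  v j ^ 2 <= 2 * M * sqrt (sZ lo n (fun i => h * Dp h v i ^ 2)).
Proof.
  intros Hlo Hhi.
  set (Y := sZ lo n (fun i => h * Dp h v i ^ 2)).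
  assert (HY : 0 <= Y) by (apply sZ_nonneg; intros; apply Rmult_le_pos; [lra|apply pow2_ge_0]).
  assert (HsY : 0 <= sqrt Y) by apply sqrt_pos.
  destruct (Z_le_gt_dec j (lo0 rho h)) as [Hj|Hj].
  { unfold v. rewrite gj_zero by (auto; lia). simpl. nra. }
  destruct (Z_le_gt_dec (Z.of_nat (n0 rho h)) j) as [Hj2|Hj2].
  { unfold v. rewrite gj_zero by (auto; lia). simpl. nra. }
  set (m := Z.to_nat (j - lo0 rho h)).
  assert (Hv0 : v (lo0 rho h) = 0) by (unfold v; rewrite gj_zero by (auto; lia); ring).
  assert (Htel := sZ_tele (lo0 rho h) m (fun i => v i ^ 2)).
  replace (lo0 rho h + Z.of_nat m)%Z with j in Htel by (unfold m; lia).
  rewrite Hv0 in Htel. simpl in Htel. rewrite Rmult_0_l, Rminus_0_r in Htel.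
  rewrite (sZ_ext _ _ _ (fun i => Dp h v i * (h * (v (i+1)%Z + v i)))) in Htel.
  2: { intros i _. unfold Dp. field. lra. }
  assert (HCS := sZ_CS (lo0 rho h) m (Dp h v) (fun i => h * (v (i+1)%Z + v i))).
  cbv beta in HCS. rewrite Htel in HCS.
  assert (H1 : sZ (lo0 rho h) m (fun i => Dp h v i ^ 2) <= Y / h).
  { apply Rle_trans with (sZ lo n (fun i => Dp h v i ^ 2)).
    - apply sZ_sub_le; auto. intros; apply pow2_ge_0. unfold m; lia.
    - unfold Y. rewrite sZ_scal. apply Req_le. field. lra. }
  assert (H2 : sZ (lo0 rho h) m (fun i => (h * (v (i+1)%Z + v i))^2) <= 4 * h * M^2).
  { apply Rle_trans with (sZ (lo0 rho h) m (fun i => 2 * h * (h * z (i+1)%Z ^2) + 2 * h * (h * z i ^ 2))).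
    - apply sZ_le. intros i _. pose proof (v_sq_le i). pose proof (v_sq_le (i+1)%Z).
      assert (0 <= (v (i+1)%Z - v i)^2) by apply pow2_ge_0.
      assert (0 <= h^2) by apply pow2_ge_0. 
      replace ((h * (v (i + 1)%Z + v i)) ^ 2) with (h^2 * (v (i+1)%Z + v i)^2) by ring.
      assert ((v (i+1)%Z + v i)^2 <= 2 * z (i+1)%Z ^2 + 2 * z i ^2) by nra.
      apply Rle_trans with (h^2 * (2 * z (i+1)%Z ^2 + 2 * z i ^2)).
      apply Rmult_le_compat_l; auto. right; ring.
    - rewrite sZ_plus, (sZ_scal _ _ (2*h) (fun j => h * z (j+1)%Z ^2)),
        (sZ_scal _ _ (2*h) (fun j => h * z j ^2)), (sZ_shift (lo0 rho h) m 1 (fun i => h * z i ^ 2)).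
      pose proof (HL2 (lo0 rho h + 1) m). pose proof (HL2 (lo0 rho h) m). nra. }
  assert (H0 : 0 <= sZ (lo0 rho h) m (fun i => Dp h v i ^ 2)) by (apply sZ_nonneg; intros; apply pow2_ge_0).
  assert (H4 : (v j ^ 2) ^ 2 <= 4 * M^2 * Y).
  { eapply Rle_trans. apply HCS.
    apply Rle_trans with ((Y / h) * (4 * h * M^2)).
    apply Rmult_le_compat; auto. apply sZ_nonneg; intros; apply pow2_ge_0.
    right. field. lra. }
  assert (Hv2 : 0 <= v j ^ 2) by apply pow2_ge_0.
  replace (v j ^ 2) with (sqrt ((v j ^ 2)^2)) by (rewrite sqrt_pow2; auto).
  replace (2 * M * sqrt Y) with (sqrt (4 * M^2 * Y)).
  apply sqrt_le_1_alt; auto.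
  rewrite sqrt_mult_alt. replace (4 * M^2) with ((2*M)^2) by ring. rewrite sqrt_pow2 by lra. auto.
  assert (0 <= M^2) by apply pow2_ge_0. lra.
Qed.

Definition Pw lo n := sZ lo n (fun j => h * gj rho h (j+1) ^ 2 * Dp h z j ^ 2).

Lemma Y_bound lo n : sZ lo n (fun i => h * Dp h v i ^ 2) <= 2 * Pw lo n + 2 * M^2.
Proof.
  unfold Pw.
  apply Rle_trans with (sZ lo n (fun i => 2 * (h * gj rho h (i+1) ^ 2 * Dp h z i ^ 2) + 2 * (h * z i ^ 2))).
  - apply sZ_le. intros i _. unfold v, Dp.
    set (g1 := gj rho h (i+1)). set (g0 := gj rho h i).
    assert (Hg : Rabs (g1 - g0) <= h) by (apply gj_lip; lra).
    replace ((g1 * z (i + 1)%Z - g0 * z i) / h) with (g1 * ((z (i + 1)%Z - z i) / h) + z i * ((g1 - g0)/h))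
      by (field; lra).
    set (p := g1 * ((z (i + 1)%Z - z i) / h)). set (q := (g1 - g0)/h).
    assert (Hq : q^2 <= 1).
    { unfold q. replace (((g1 - g0) / h)^2) with ((g1-g0)^2 / h^2) by (field; lra).
      assert ((g1-g0)^2 <= h^2).
      { replace ((g1-g0)^2) with (Rabs (g1-g0) ^ 2) by (rewrite RPow_abs; apply Rabs_right; apply Rle_ge, pow2_ge_0).
        apply pow_maj_Rabs. rewrite Rabs_Rabsolu. auto. }
      assert (0 < h^2) by (apply pow_lt; auto).
      apply Rmult_le_reg_r with (h^2); auto. unfold Rdiv. rewrite Rmult_assoc, Rinv_l by lra. lra. }
    assert (0 <= (p - z i * q)^2) by apply pow2_ge_0.
    assert ((p + z i * q)^2 <= 2 * p^2 + 2 * z i^2 * q^2) by nra.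
    assert (z i ^2 * q^2 <= z i ^2) by (assert (0 <= z i ^2) by apply pow2_ge_0; nra).
    replace (h * g1 ^ 2 * ((z (i + 1)%Z - z i) / h) ^ 2) with (h * p^2) by (unfold p; ring).
    apply Rle_trans with (h * (2*p^2 + 2*z i^2)); [apply Rmult_le_compat_l; lra | lra].
  - rewrite sZ_plus, (sZ_scal _ _ 2), (sZ_scal _ _ 2). pose proof (HL2 lo n). lra.
Qed.

Definition Lam lo n := 4 * M * sqrt (sZ lo n (fun i => h * Dp h v i ^ 2)) + 2 * M^2.

Lemma Lam_bounds j lo n : (lo <= lo0 rho h)%Z -> (Z.of_nat (n0 rho h) <= lo + Z.of_nat n)%Z ->
  (gj rho h j * z j)^2 <= Lam lo n /\ (gj rho h j * z (j+1)%Z)^2 <= Lam lo n.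
Proof.
  intros H1 H2. unfold Lam.
  set (Y := sZ lo n (fun i => h * Dp h v i ^ 2)).
  assert (HsY : 0 <= sqrt Y) by apply sqrt_pos.
  assert (G0 := GN j lo n H1 H2). assert (G1 := GN (j+1) lo n H1 H2). fold Y in G0, G1.
  unfold v in G0, G1.
  split.
  - assert (0 <= M^2) by apply pow2_ge_0. assert (0 <= M * sqrt Y) by (apply Rmult_le_pos; auto). lra.
  - set (g1 := gj rho h (j+1)) in *. set (g0 := gj rho h j).
    assert (Hg : Rabs (g1 - g0) <= h) by (apply gj_lip; lra).
    assert (Hg2 : (g0 - g1)^2 <= h^2).
    { replace ((g0-g1)^2) with (Rabs (g1-g0) ^ 2).
      apply pow_maj_Rabs. rewrite Rabs_Rabsolu. auto.
      rewrite RPow_abs, Rabs_right. ring. apply Rle_ge, pow2_ge_0. }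
    assert (Hz : h * z (j+1)%Z ^ 2 <= M^2) by (pose proof (HL2 (j+1) 1); simpl in H; rewrite Z.add_0_r in H; lra).
    replace (g0 * z (j+1)%Z) with (g1 * z (j+1)%Z + (g0 - g1) * z (j+1)%Z) by ring.
    set (a := g1 * z (j+1)%Z). set (b := (g0 - g1) * z (j + 1)%Z).
    assert (0 <= (a - b)^2) by apply pow2_ge_0.
    assert (b^2 <= h^2 * z (j+1)%Z ^2).
    { unfold b. rewrite Rpow_mult_distr. apply Rmult_le_compat_r. apply pow2_ge_0. auto. }
    assert (h^2 * z (j+1)%Z ^ 2 <= M^2).
    { replace (h^2 * z (j+1)%Z ^ 2) with (h * (h * z (j+1)%Z ^ 2)) by ring.
      assert (0 <= h * z (j+1)%Z ^ 2) by (apply Rmult_le_pos; [lra|apply pow2_ge_0]). nra. }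
    assert (0 <= M * sqrt Y) by (apply Rmult_le_pos; auto).
    assert ((a+b)^2 <= 2*a^2 + 2*b^2) by nra.
    assert (Ga : a^2 <= 2 * M * sqrt Y) by exact G1.
    lra.
Qed.

Lemma kappa_bounds : 0 <= (INR k + 1) / (INR k + 2) <= 1.
Proof.
  pose proof (pos_INR k). split.
  apply Rdiv_le_0_compat; lra.
  apply Rmult_le_reg_r with (INR k + 2). lra. unfold Rdiv. rewrite Rmult_assoc, Rinv_l by lra. lra.
Qed.

Definition bd lo n := (XLj h c z (lo + Z.of_nat n) - XLj h c z lo)/h^2
  + beta*(INR k+1)/(INR k+2) * (XNj k c z (lo + Z.of_nat n) - XNj k c z lo).

Definition Cst0 := 139 * M^2 + Rabs beta * M^2 * (1 + 2 * M^2) + 64 * beta^2 * M^6.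

Theorem per_time lo n : (lo <= lo0 rho h)%Z -> (Z.of_nat (n0 rho h) <= lo + Z.of_nat n)%Z ->
  sZ lo n (fun j => h * c j * z j * Fop k beta h z j) >= /4 * Pw lo n - Cst0 + bd lo n.
Proof.
  intros H1 H2.
  rewrite sum_identity by lra. fold (bd lo n).
  rewrite sZ_plus.
  assert (HQ : sZ lo n (fun j => Qpj h c z j / h^2) >= /2 * Pw lo n - 138 * M^2).
  { apply Rle_ge. apply Rle_trans with (sZ lo n (fun j =>
      /2 * (h * gj rho h (j+1) ^ 2 * Dp h z j ^ 2) - 8 * (h * z (j + -1)%Z ^ 2) - 130 * (h * z j ^ 2))).
    - rewrite !sZ_minus, (sZ_scal _ _ (/2)), (sZ_scal _ _ 8), (sZ_scal _ _ 130). rewrite (sZ_shift lo n (-1) (fun i => h * z i ^ 2)).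
      unfold Pw. pose proof (HL2 (lo + -1) n). pose proof (HL2 lo n). lra.
    - apply sZ_le. intros j _. apply Rge_le. apply Qpj_lower; auto. }
  set (L := Lam lo n).
  assert (HN : Rabs (sZ lo n (fun j => beta * (INR k + 1) / (INR k + 2) * QNj k c z j)) <=
     Rabs beta * (1 + L) * M^2).
  { eapply Rle_trans. apply sZ_abs.
    apply Rle_trans with (sZ lo n (fun j => Rabs beta * (/2 * h * (1 + L) * (z j ^2 + z (j+1)%Z ^2)))).
    - apply sZ_le. intros j _.
      replace (beta * (INR k + 1) / (INR k + 2) * QNj k c z j) with
        (beta * ((INR k + 1) / (INR k + 2) * QNj k c z j)) by (unfold Rdiv; ring).
      rewrite Rabs_mult. apply Rmult_le_compat_l. apply Rabs_pos.
      rewrite Rabs_mult. pose proof kappa_bounds. rewrite (Rabs_right ((INR k + 1) / (INR k + 2))) by lra.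
      destruct (Lam_bounds j lo n H1 H2) as [B1 B2].
      assert (HQN := QN_bound k h (gj rho h j) (c j) (c (j+1)%Z) (z j) (z (j+1)%Z) L Hk Hh
        (gfun_bounds rho (IZR j * h)) (psi_diff rho h j Hr Hh) B1 B2).
      unfold QNj.
      assert (0 <= Rabs (QN k (c j) (c (j + 1)%Z) (z j) (z (j + 1)%Z))) by apply Rabs_pos.
      apply Rle_trans with (1 * Rabs (QN k (c j) (c (j + 1)%Z) (z j) (z (j + 1)%Z))).
      apply Rmult_le_compat_r; lra. lra.
    - rewrite sZ_scal.
      replace (fun j => / 2 * h * (1 + L) * (z j ^ 2 + z (j + 1)%Z ^ 2)) with
        (fun j => (/2 * (1 + L)) * (h * z j ^ 2) + (/2 * (1 + L)) * (h * z (j + 1)%Z ^ 2))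
        by (apply FunctionalExtensionality.functional_extensionality; intro; ring).
      rewrite sZ_plus, (sZ_scal _ _ (/2 * (1 + L)) (fun j => h * z j ^ 2)), (sZ_scal _ _ (/2 * (1 + L)) (fun j => h * z (j+1)%Z ^ 2)), (sZ_shift lo n 1 (fun i => h * z i ^ 2)).
      pose proof (HL2 lo n). pose proof (HL2 (lo+1) n).
      assert (0 <= L).
      { unfold L, Lam. assert (0 <= sqrt (sZ lo n (fun i => h * Dp h v i ^ 2))) by apply sqrt_pos.
        assert (0 <= M^2) by apply pow2_ge_0. nra. }
      assert (0 <= Rabs beta) by apply Rabs_pos.
      assert (0 <= Rabs beta * (/2 * (1+L))) by (apply Rmult_le_pos; lra).
      nra. }
  assert (HY := Y_bound lo n).
  set (Y := sZ lo n (fun i => h * Dp h v i ^ 2)) in *.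
  assert (HLd : L = 4 * M * sqrt Y + 2 * M^2) by reflexivity.
  assert (Hsq : sqrt Y * sqrt Y = Y) by (apply sqrt_sqrt; apply sZ_nonneg; intros; apply Rmult_le_pos; [lra|apply pow2_ge_0]).
  assert (Hw : 4 * Rabs beta * M^3 * sqrt Y <= Y/16 + 64 * beta^2 * M^6).
  { assert (0 <= (sqrt Y / 4 - 8 * Rabs beta * M^3)^2) by apply pow2_ge_0.
    assert (Hb2 : Rabs beta ^ 2 = beta ^2) by (rewrite RPow_abs; apply Rabs_right; apply Rle_ge, pow2_ge_0).
    assert (Heq : (sqrt Y / 4 - 8 * Rabs beta * M^3)^2 =
      (sqrt Y * sqrt Y)/16 - 4 * Rabs beta * M^3 * sqrt Y + 64 * (Rabs beta ^ 2) * M^6) by field.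
    rewrite Hsq, Hb2 in Heq. lra. }
  set (Sn := sZ lo n (fun j => beta * (INR k + 1) / (INR k + 2) * QNj k c z j)) in *.
  pose proof (Rabs_maj2 Sn) as HN1.
  unfold Cst0.
  assert (Rabs beta * (1 + L) * M^2 = Rabs beta * M^2 * (1 + 2*M^2) + 4 * Rabs beta * M^3 * sqrt Y)
    by (rewrite HLd; ring).
  unfold bd.
  assert (HP0 : 0 <= Pw lo n).
  { unfold Pw. apply sZ_nonneg. intros. apply Rmult_le_pos. apply Rmult_le_pos. lra. apply pow2_ge_0. apply pow2_ge_0. }
  assert (0 <= M^2) by apply pow2_ge_0. lra.
Qed.
End PerTime.

Lemma tb c x y C : Rabs c <= C -> - (C * (x^2 + y^2)) <= c * x * y <= C * (x^2 + y^2).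
Proof.
  intros Hc.
  assert (Hp : Rabs (x*y) <= x^2 + y^2).
  { assert (0 <= (x+y)^2) by apply pow2_ge_0. assert (0 <= (x-y)^2) by apply pow2_ge_0.
    assert (0 <= x^2) by apply pow2_ge_0. assert (0 <= y^2) by apply pow2_ge_0.
    apply Rabs_le. split; nra. }
  assert (Rabs (c * x * y) <= C * (x^2+y^2)).
  { rewrite Rmult_assoc, Rabs_mult. apply Rmult_le_compat; auto; apply Rabs_pos. }
  pose proof (Rabs_maj2 (c*x*y)). pose proof (Rle_abs (c*x*y)). split; lra.
Qed.

Lemma tb2 c x C : Rabs c <= C -> - (C * x^2) <= c * x^2 <= C * x^2.
Proof.
  intros Hc. assert (0 <= x^2) by apply pow2_ge_0.
  assert (Rabs (c * x^2) <= C * x^2).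
  { rewrite Rabs_mult. rewrite (Rabs_right (x^2)) by lra. apply Rmult_le_compat_r; auto. }
  pose proof (Rabs_maj2 (c*x^2)). pose proof (Rle_abs (c*x^2)). split; lra.
Qed.

Lemma XL_bound h cm2 cm1 c0 c1 um2 um1 u0 u1 C :
  Rabs cm2 <= C -> Rabs cm1 <= C -> Rabs c0 <= C -> Rabs c1 <= C ->
  Rabs (XL h cm2 cm1 c0 c1 um2 um1 u0 u1) <= (10 * C + 8 * h^2) * (um2^2 + um1^2 + u0^2 + u1^2).
Proof.
  intros H1 H2 H3 H4. unfold XL.
  pose proof (tb2 cm2 u0 C H1). pose proof (tb cm1 um1 u0 C H2). pose proof (tb cm1 um1 u1 C H2).
  pose proof (tb2 cm1 um1 C H2). pose proof (tb c0 um2 u0 C H3). pose proof (tb c0 um1 u0 C H3).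
  pose proof (tb2 c0 u0 C H3). pose proof (tb c1 um1 u0 C H4). pose proof (tb2 c1 um1 C H4).
  pose proof (tb2 c1 u0 C H4).
  assert (0 <= h^2) by apply pow2_ge_0.
  assert (0 <= um2^2) by apply pow2_ge_0. assert (0 <= um1^2) by apply pow2_ge_0.
  assert (0 <= u0^2) by apply pow2_ge_0. assert (0 <= u1^2) by apply pow2_ge_0.
  assert (0 <= C) by (eapply Rle_trans; [apply Rabs_pos|apply H1]).
  assert (0 <= C * um2^2) by nra. assert (0 <= C * um1^2) by nra.
  assert (0 <= C * u0^2) by nra. assert (0 <= C * u1^2) by nra.
  assert (0 <= h^2 * um1^2) by nra. assert (0 <= h^2 * u0^2) by nra.
  assert (0 <= h^2 * um2^2) by nra. assert (0 <= h^2 * u1^2) by nra.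
  apply Rabs_le. split; nra.
Qed.

Definition XL1 (um2 um1 u0 u1 : R) : R :=
  - u0^2 - um1*u0 + 3/2*um1*u1 + um1^2 - /2*um2*u0.

Lemma key_id1 k beta h um2 um1 u0 u1 u2 : h <> 0 ->
  h*u0*Floc k beta h um2 um1 u0 u1 u2 =
  (u1 - 2*u0 + um1)^2 / h^2
  + (XL1 um1 u0 u1 u2 - XL1 um2 um1 u0 u1)/h^2
  + beta*(INR k+1)/(INR k+2) * (XN k 1 u0 u1 - XN k 1 um1 u0).
Proof.
  intro Hh. unfold Floc, XL1, XN.
  assert (INR k + 2 <> 0) by (pose proof (pos_INR k); lra).
  field. auto.
Qed.

Lemma XL1_bound um2 um1 u0 u1 :
  Rabs (XL1 um2 um1 u0 u1) <= 5 * (um2^2 + um1^2 + u0^2 + u1^2).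
Proof.
  unfold XL1.
  pose proof (tb 1 um1 u0 1 ltac:(rewrite Rabs_R1; lra)).
  pose proof (tb 1 um1 u1 1 ltac:(rewrite Rabs_R1; lra)).
  pose proof (tb 1 um2 u0 1 ltac:(rewrite Rabs_R1; lra)).
  assert (0 <= um2^2) by apply pow2_ge_0. assert (0 <= um1^2) by apply pow2_ge_0.
  assert (0 <= u0^2) by apply pow2_ge_0. assert (0 <= u1^2) by apply pow2_ge_0.
  apply Rabs_le. split; nra.
Qed.

Lemma XN_bound k c um1 u0 C B : (k = 1%nat \/ k = 2%nat) -> Rabs c <= C ->
  um1^2 <= B -> u0^2 <= B ->
  Rabs (XN k c um1 u0) <= C * (1 + B) * (um1^2 + u0^2).
Proof.
  intros Hk Hc Hb1 Hb2. unfold XN.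
  assert (Hs : Rabs (u0^k + um1^k) <= 2 * (1 + B)).
  { destruct Hk as [ -> | -> ].
    - eapply Rle_trans. apply Rabs_triang. rewrite !pow_1.
      pose proof (abs_half u0). pose proof (abs_half um1). assert (0 <= u0^2) by apply pow2_ge_0. lra.
    - assert (0 <= u0^2) by apply pow2_ge_0. assert (0 <= um1^2) by apply pow2_ge_0.
      rewrite Rabs_right by lra. lra. }
  assert (Hp : Rabs (um1*u0) <= /2 * (um1^2 + u0^2)).
  { assert (0 <= (um1+u0)^2) by apply pow2_ge_0. assert (0 <= (um1-u0)^2) by apply pow2_ge_0.
    apply Rabs_le. split; nra. }
  replace (/2 * c * um1 * u0 * (u0^k + um1^k)) with (/2 * (c * ((um1 * u0) * (u0^k + um1^k)))) by ring.
  rewrite Rabs_mult, Rabs_mult, Rabs_mult, (Rabs_right (/2)) by lra.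
  assert (0 <= C) by (eapply Rle_trans; [apply Rabs_pos|apply Hc]).
  assert (Rabs (um1*u0) * Rabs (u0^k+um1^k) <= (/2 * (um1^2+u0^2)) * (2*(1+B))).
  { apply Rmult_le_compat; auto; apply Rabs_pos. }
  assert (Rabs c * (Rabs (um1*u0) * Rabs (u0^k+um1^k)) <= C * ((/2 * (um1^2+u0^2)) * (2*(1+B)))).
  { apply Rmult_le_compat; auto. apply Rabs_pos. apply Rmult_le_pos; apply Rabs_pos. }
  assert (0 <= C * ((/2 * (um1^2+u0^2)) * (1+B))).
  { assert (0 <= um1^2) by apply pow2_ge_0. assert (0 <= u0^2) by apply pow2_ge_0.
    assert (0 <= 1 + B) by (assert (0 <= u0^2) by apply pow2_ge_0; lra).
    apply Rmult_le_pos; auto. apply Rmult_le_pos; lra. }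
  nra.
Qed.

Lemma cpt_plus (A B : R -> R) x : continuity_pt A x -> continuity_pt B x -> continuity_pt (fun t => A t + B t) x.
Proof. intros; apply (continuity_pt_plus A B); auto. Qed.
Lemma cpt_minus (A B : R -> R) x : continuity_pt A x -> continuity_pt B x -> continuity_pt (fun t => A t - B t) x.
Proof. intros; apply (continuity_pt_minus A B); auto. Qed.
Lemma cpt_mult (A B : R -> R) x : continuity_pt A x -> continuity_pt B x -> continuity_pt (fun t => A t * B t) x.
Proof. intros; apply (continuity_pt_mult A B); auto. Qed.
Lemma cpt_opp (A : R -> R) x : continuity_pt A x -> continuity_pt (fun t => - A t) x.
Proof. intros; apply (continuity_pt_opp A); auto. Qed.
Lemma cpt_const (c : R) x : continuity_pt (fun _ => c) x.
Proof. apply continuity_pt_const. intros a b; auto. Qed.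
Lemma cpt_div (A : R -> R) c x : continuity_pt A x -> continuity_pt (fun t => A t / c) x.
Proof. intros; apply (cpt_mult A (fun _ => /c)); auto; apply cpt_const. Qed.
Lemma cpt_pow (A : R -> R) n x : continuity_pt A x -> continuity_pt (fun t => A t ^ n) x.
Proof.
  intros H. induction n; simpl. apply cpt_const.
  apply (cpt_mult A (fun t => A t ^ n)); auto.
Qed.
Lemma cpt_abs (A : R -> R) x : continuity_pt A x -> continuity_pt (fun t => Rabs (A t)) x.
Proof. intros. apply (continuity_pt_comp A Rabs). auto. apply Rcontinuity_abs. Qed.

Ltac cont0 Hv :=
  match goal with
  | |- continuity_pt (fun _ => ?c) _ => apply cpt_const
  | |- continuity_pt (fun t => @?A t + @?B t) _ => apply (cpt_plus A B); cont0 Hv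
  | |- continuity_pt (fun t => @?A t - @?B t) _ => apply (cpt_minus A B); cont0 Hv
  | |- continuity_pt (fun t => @?A t * @?B t) _ => apply (cpt_mult A B); cont0 Hv
  | |- continuity_pt (fun t => @?A t / ?c) _ => apply (cpt_div A c); cont0 Hv
  | |- continuity_pt (fun t => - @?A t) _ => apply (cpt_opp A); cont0 Hv
  | |- continuity_pt (fun t => @?A t ^ ?n) _ => apply (cpt_pow A n); cont0 Hv
  | |- continuity_pt _ _ => apply Hv
  end.

Lemma Fop_cont (v : R -> Z -> R) k beta h j x :
  (forall j x, continuity_pt (fun t => v t j) x) ->
  continuity_pt (fun t => Fop k beta h (v t) j) x.
Proof.
  intros Hv. unfold Fop, Dp, Dm, D0, gpow. cont0 Hv.
Qed.

Ltac cont Hv :=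
  match goal with
  | |- continuity_pt (fun _ => ?c) _ => apply cpt_const
  | |- continuity_pt (fun t => @?A t + @?B t) _ => apply (cpt_plus A B); cont Hv
  | |- continuity_pt (fun t => @?A t - @?B t) _ => apply (cpt_minus A B); cont Hv
  | |- continuity_pt (fun t => @?A t * @?B t) _ => apply (cpt_mult A B); cont Hv
  | |- continuity_pt (fun t => @?A t / ?c) _ => apply (cpt_div A c); cont Hv
  | |- continuity_pt (fun t => - @?A t) _ => apply (cpt_opp A); cont Hv
  | |- continuity_pt (fun t => @?A t ^ ?n) _ => apply (cpt_pow A n); cont Hv
  | |- continuity_pt (fun t => Rabs (@?A t)) _ => apply (cpt_abs A); cont Hv
  | |- continuity_pt (fun t => sZ ?lo ?n (fun j => @?F t j)) _ =>
      apply (sZ_cont lo n (fun t j => F t j)); intro; cont Hv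
  | |- continuity_pt (fun t => Fop ?k ?b ?h (@?V t) ?j) _ => apply (Fop_cont V k b h j); [intros; cont Hv]
  | |- continuity_pt (fun t => if ?b then @?A t else @?B t) _ => destruct b; cont Hv
  | |- continuity_pt _ _ => first [apply Hv | match goal with H : forall x, continuity_pt _ x |- _ => apply H end]
  end.



Lemma RI_plus (f g : R -> R) a b : ex_RInt f a b -> ex_RInt g a b ->
  RInt (fun x => f x + g x) a b = RInt f a b + RInt g a b.
Proof. intros. apply (RInt_plus (V := R_CompleteNormedModule)); auto. Qed.
Lemma RI_minus (f g : R -> R) a b : ex_RInt f a b -> ex_RInt g a b ->
  RInt (fun x => f x - g x) a b = RInt f a b - RInt g a b.
Proof. intros. apply (RInt_minus (V := R_CompleteNormedModule)); auto. Qed.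
Lemma RI_scal (f : R -> R) a b c : ex_RInt f a b -> RInt (fun x => c * f x) a b = c * RInt f a b.
Proof. intros. apply (RInt_scal (V := R_CompleteNormedModule)); auto. Qed.
Lemma RI_const a b c : RInt (fun _ => c) a b = (b - a) * c.
Proof. rewrite (RInt_const (V := R_CompleteNormedModule)). reflexivity. Qed.

Lemma RI_sZ (F : R -> Z -> R) lo n a b : (forall j x, continuity_pt (fun t => F t j) x) ->
  RInt (fun t => sZ lo n (F t)) a b = sZ lo n (fun j => RInt (fun t => F t j) a b).
Proof.
  intros HF. induction n.
  - simpl. rewrite RI_const. ring.
  - cbn [sZ]. rewrite RI_plus. rewrite IHn. auto.
    apply RInt_cont_ex. intro x. apply (sZ_cont lo n F x). intro j; apply HF.
    apply RInt_cont_ex. intro x. apply HF.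
Qed.

Lemma RI_le (f g : R -> R) a b : a <= b -> (forall x, continuity_pt f x) -> (forall x, continuity_pt g x) ->
  (forall x, a <= x <= b -> f x <= g x) -> RInt f a b <= RInt g a b.
Proof.
  intros Hab Hf Hg H. apply RInt_le; auto; try (apply RInt_cont_ex; auto).
  intros x Hx; apply H; lra.
Qed.

Lemma RI_abs (f : R -> R) a b : a <= b -> (forall x, continuity_pt f x) ->
  - RInt (fun t => Rabs (f t)) a b <= RInt f a b.
Proof.
  intros Hab Hf.
  replace (- RInt (fun t => Rabs (f t)) a b) with (-1 * RInt (fun t => Rabs (f t)) a b) by ring.
  rewrite <- (RI_scal _ _ _ (-1)). 2: apply RInt_cont_ex; intro; apply cpt_abs; auto.
  apply RI_le; auto. intro x. apply (cpt_mult (fun _ => -1) (fun t => Rabs (f t))). apply cpt_const.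
  apply cpt_abs; auto.
  intros. pose proof (Rabs_maj2 (f x)). lra.
Qed.

Lemma sZ4 lo w : sZ lo 4 w = w lo + w (lo+1)%Z + w (lo+2)%Z + w (lo+3)%Z.
Proof. cbn [sZ]. simpl Z.of_nat. rewrite Z.add_0_r. ring. Qed.

Lemma sZ_window4 j0 m w K : (forall lo n, sZ lo n w <= K) ->
  sZ j0 m (fun j => sZ (j + -2) 4 w) <= 4 * K.
Proof.
  intros HK.
  rewrite (sZ_ext _ _ _ (fun j => w (j + -2)%Z + w (j + -1)%Z + w (j + 0)%Z + w (j + 1)%Z)).
  2: { intros j _. rewrite sZ4. replace (j + -2 + 1)%Z with (j + -1)%Z by ring.
       replace (j + -2 + 2)%Z with (j + 0)%Z by ring. replace (j + -2 + 3)%Z with (j + 1)%Z by ring. ring. }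
  rewrite !sZ_plus, !sZ_shift.
  pose proof (HK (j0 + -2)%Z m). pose proof (HK (j0 + -1)%Z m). pose proof (HK (j0 + 0)%Z m).
  pose proof (HK (j0 + 1)%Z m). lra.
Qed.

Definition X1z (k : nat) (beta h : R) (z : Z -> R) (j : Z) : R :=
  XL1 (z (j + -2)%Z) (z (j + -1)%Z) (z j) (z (j+1)%Z) / h^2
  + beta*(INR k+1)/(INR k+2) * XN k 1 (z (j + -1)%Z) (z j).

Lemma sum_identity1 k beta h z lo n : h <> 0 ->
  sZ lo n (fun j => h * 1 * z j * Fop k beta h z j) =
  sZ lo n (fun j => (z (j+1)%Z - 2 * z j + z (j + -1)%Z)^2 / h^2)
  + X1z k beta h z (lo + Z.of_nat n) - X1z k beta h z lo.
Proof.
  intros Hh. assert (INR k + 2 <> 0) by (pose proof (pos_INR k); lra).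
  rewrite (sZ_ext lo n _ (fun j => (z (j+1)%Z - 2 * z j + z (j + -1)%Z)^2 / h^2
    + (X1z k beta h z (j+1) - X1z k beta h z j))).
  2: { intros j _. rewrite Fop_loc by auto. unfold X1z.
       replace (j + 1 + -2)%Z with (j + -1)%Z by ring. replace (j + 1 + -1)%Z with j by ring.
       replace (j + 1 + 1)%Z with (j + 2)%Z by ring.
       rewrite Rmult_1_r. rewrite (key_id1 k beta h) by auto. field. auto. }
  rewrite sZ_plus, sZ_tele. ring.
Qed.

Lemma X1z_bound k beta h z j K : (k = 1%nat \/ k = 2%nat) -> 0 < h -> 0 <= K ->
  (forall lo n, sZ lo n (fun i => h * z i ^ 2) <= K) ->
  Rabs (X1z k beta h z j) <= (5 / h^3 + Rabs beta * (1 + K/h) / h) * sZ (j + -2) 4 (fun i => h * z i ^ 2).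
Proof.
  intros Hk Hh HK0 HK.
  assert (Hz : forall i, z i ^ 2 <= K / h).
  { intro i. pose proof (HK i 1%nat). simpl in H. rewrite Z.add_0_r in H.
    apply Rmult_le_reg_l with h; auto. field_simplify; lra. }
  rewrite sZ4. replace (j + -2 + 1)%Z with (j + -1)%Z by ring.
  replace (j + -2 + 2)%Z with j by ring. replace (j + -2 + 3)%Z with (j + 1)%Z by ring.
  set (a := z (j + -2)%Z). set (b := z (j + -1)%Z). set (c := z j). set (d := z (j+1)%Z).
  assert (Ha : 0 <= a^2) by apply pow2_ge_0. assert (0 <= b^2) by apply pow2_ge_0.
  assert (0 <= c^2) by apply pow2_ge_0. assert (0 <= d^2) by apply pow2_ge_0.
  unfold X1z. fold a b c d.
  eapply Rle_trans. apply Rabs_triang.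
  assert (Hh3 : 0 < h^3) by (apply pow_lt; auto). assert (Hh2 : 0 < h^2) by (apply pow_lt; auto).
  assert (HX1 : Rabs (XL1 a b c d / h^2) <= 5 / h^3 * (h * a^2 + h * b^2 + h * c^2 + h * d^2)).
  { unfold Rdiv. rewrite Rabs_mult, (Rabs_right (/h^2)) by (apply Rle_ge; left; apply Rinv_0_lt_compat; auto).
    pose proof (XL1_bound a b c d).
    apply Rle_trans with (5 * (a^2+b^2+c^2+d^2) * /h^2).
    apply Rmult_le_compat_r. left; apply Rinv_0_lt_compat; auto. auto.
    right. field. lra. }
  assert (HX2 : Rabs (beta * (INR k + 1) / (INR k + 2) * XN k 1 b c) <=
      Rabs beta * (1 + K/h) / h * (h * a^2 + h * b^2 + h * c^2 + h * d^2)).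
  { pose proof (XN_bound k 1 b c 1 (K/h) Hk ltac:(rewrite Rabs_R1; lra) (Hz _) (Hz _)).
    replace (beta * (INR k + 1) / (INR k + 2) * XN k 1 b c) with
      (beta * ((INR k + 1) / (INR k + 2) * XN k 1 b c)) by (unfold Rdiv; ring).
    rewrite Rabs_mult, Rabs_mult.
    assert (Hkap : 0 <= (INR k + 1) / (INR k + 2) <= 1).
    { pose proof (pos_INR k). split. apply Rdiv_le_0_compat; lra.
      apply Rmult_le_reg_r with (INR k + 2). lra. unfold Rdiv. rewrite Rmult_assoc, Rinv_l by lra. lra. }
    rewrite (Rabs_right ((INR k + 1) / (INR k + 2))) by lra.
    assert (0 <= K/h) by (apply Rdiv_le_0_compat; lra).
    assert (Hxn : (INR k + 1) / (INR k + 2) * Rabs (XN k 1 b c) <= 1 * (1 + K/h) * (b^2 + c^2)).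
    { apply Rle_trans with (1 * Rabs (XN k 1 b c)). apply Rmult_le_compat_r. apply Rabs_pos. lra. lra. }
    replace (Rabs beta * (1 + K / h) / h * (h * a ^ 2 + h * b ^ 2 + h * c ^ 2 + h * d ^ 2))
      with (Rabs beta * ((1 + K/h) * (a^2 + b^2 + c^2 + d^2))) by (field; lra).
    apply Rmult_le_compat_l. apply Rabs_pos.
    assert (0 <= (1 + K/h) * a^2) by (apply Rmult_le_pos; lra).
    assert (0 <= (1 + K/h) * d^2) by (apply Rmult_le_pos; lra). nra. }
  lra.
Qed.

Lemma local_sum_eq h Rr w : local_sum h Rr w =
  sZ (- Z.of_nat (Z.to_nat (up (Rr / h))) - 1) (2 * Z.to_nat (up (Rr / h)) + 2)
    (fun j => if Rle_dec (Rabs (IZR j * h)) Rr then h * w j ^ 2 else 0).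
Proof. unfold local_sum. apply (sZ_window (fun j => if Rle_dec (Rabs (IZR j * h)) Rr then h * w j ^ 2 else 0)). Qed.

Lemma cont_local_sum h Rr (w : R -> Z -> R) x : (forall j x, continuity_pt (fun t => w t j) x) ->
  continuity_pt (fun t => local_sum h Rr (w t)) x.
Proof.
  intros Hw.
  replace (fun t => local_sum h Rr (w t)) with (fun t =>
    sZ (- Z.of_nat (Z.to_nat (up (Rr / h))) - 1) (2 * Z.to_nat (up (Rr / h)) + 2)
    (fun j => if Rle_dec (Rabs (IZR j * h)) Rr then h * w t j ^ 2 else 0)).
  2: { apply FunctionalExtensionality.functional_extensionality. intro t. rewrite local_sum_eq. reflexivity. }
  cont Hw.
Qed.

Lemma local_sum_Dp h Rr z lo n : 0 < h -> h <= 1 -> 0 < Rr ->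
  (lo <= - Z.of_nat (Z.to_nat (up (Rr / h))) - 1)%Z ->
  (Z.of_nat (Z.to_nat (up (Rr / h))) + 1 <= lo + Z.of_nat n)%Z ->
  local_sum h Rr (Dp h z) <= Pw h (Rr + 3) z lo n.
Proof.
  intros Hh Hh1 HR Hlo Hhi. rewrite local_sum_eq. unfold Pw.
  set (P := fun j => h * gj (Rr + 3) h (j + 1) ^ 2 * Dp h z j ^ 2).
  assert (HP : forall j, 0 <= P j).
  { intro j. unfold P. apply Rmult_le_pos. apply Rmult_le_pos. lra. apply pow2_ge_0. apply pow2_ge_0. }
  apply Rle_trans with (sZ (- Z.of_nat (Z.to_nat (up (Rr / h))) - 1) (2 * Z.to_nat (up (Rr / h)) + 2) P).
  - apply sZ_le. intros j _. destruct Rle_dec as [Hj|Hj]; [|apply HP].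
    unfold P, gj. rewrite gfun_one. right; ring.
    rewrite plus_IZR. replace ((IZR j + 1) * h) with (IZR j * h + h) by ring.
    eapply Rle_trans. apply Rabs_triang. rewrite (Rabs_right h) by lra. lra.
  - apply sZ_sub_le; auto. lia.
Qed.

Lemma local_sum_Dm h Rr z lo n : 0 < h -> h <= 1 -> 0 < Rr ->
  (lo <= - Z.of_nat (Z.to_nat (up (Rr / h))) - 2)%Z ->
  (Z.of_nat (Z.to_nat (up (Rr / h))) + 1 <= lo + Z.of_nat n)%Z ->
  local_sum h Rr (Dm h z) <= Pw h (Rr + 3) z lo n.
Proof.
  intros Hh Hh1 HR Hlo Hhi. rewrite local_sum_eq. unfold Pw.
  set (P := fun j => h * gj (Rr + 3) h (j + 1) ^ 2 * Dp h z j ^ 2).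
  assert (HP : forall j, 0 <= P j).
  { intro j. unfold P. apply Rmult_le_pos. apply Rmult_le_pos. lra. apply pow2_ge_0. apply pow2_ge_0. }
  apply Rle_trans with (sZ (- Z.of_nat (Z.to_nat (up (Rr / h))) - 1) (2 * Z.to_nat (up (Rr / h)) + 2)
     (fun j => P (j + -1)%Z)).
  - apply sZ_le. intros j _. destruct Rle_dec as [Hj|Hj]; [|apply HP].
    unfold P, gj. replace (j + -1 + 1)%Z with j by ring. rewrite gfun_one by lra.
    unfold Dm, Dp. replace (j + -1 + 1)%Z with j by ring. replace (j - 1)%Z with (j + -1)%Z by ring.
    right; ring.
  - rewrite sZ_shift. apply sZ_sub_le; auto. lia. lia.
Qed.

Definition Xmz (k : nat) (beta h : R) (c z : Z -> R) (j : Z) : R :=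
  XLj h c z j / h^2 + beta*(INR k+1)/(INR k+2) * XNj k c z j.

Lemma Xmz_bound k beta h c z j K C : (k = 1%nat \/ k = 2%nat) -> 0 < h -> 0 <= K -> 0 <= C ->
  (forall i, Rabs (c i) <= C) ->
  (forall lo n, sZ lo n (fun i => h * z i ^ 2) <= K) ->
  Rabs (Xmz k beta h c z j) <=
    ((10 * C + 8 * h^2) / h^3 + Rabs beta * C * (1 + K/h) / h) * sZ (j + -2) 4 (fun i => h * z i ^ 2).
Proof.
  intros Hk Hh HK0 HC Hc HK.
  assert (Hz : forall i, z i ^ 2 <= K / h).
  { intro i. pose proof (HK i 1%nat). simpl in H. rewrite Z.add_0_r in H.
    apply Rmult_le_reg_l with h; auto. field_simplify; lra. }
  rewrite sZ4. replace (j + -2 + 1)%Z with (j + -1)%Z by ring.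
  replace (j + -2 + 2)%Z with j by ring. replace (j + -2 + 3)%Z with (j + 1)%Z by ring.
  unfold Xmz, XLj, XNj.
  set (a := z (j + -2)%Z). set (b := z (j + -1)%Z). set (cc := z j). set (d := z (j+1)%Z).
  assert (Ha : 0 <= a^2) by apply pow2_ge_0. assert (0 <= b^2) by apply pow2_ge_0.
  assert (0 <= cc^2) by apply pow2_ge_0. assert (0 <= d^2) by apply pow2_ge_0.
  eapply Rle_trans. apply Rabs_triang.
  assert (Hh3 : 0 < h^3) by (apply pow_lt; auto). assert (Hh2 : 0 < h^2) by (apply pow_lt; auto).
  assert (HX1 : Rabs (XL h (c (j + -2)%Z) (c (j + -1)%Z) (c j) (c (j + 1)%Z) a b cc d / h^2) <=
      (10 * C + 8 * h^2) / h^3 * (h * a^2 + h * b^2 + h * cc^2 + h * d^2)).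
  { unfold Rdiv. rewrite Rabs_mult, (Rabs_right (/h^2)) by (apply Rle_ge; left; apply Rinv_0_lt_compat; auto).
    pose proof (XL_bound h (c (j + -2)%Z) (c (j + -1)%Z) (c j) (c (j + 1)%Z) a b cc d C
      (Hc _) (Hc _) (Hc _) (Hc _)).
    apply Rle_trans with ((10 * C + 8 * h^2) * (a^2+b^2+cc^2+d^2) * /h^2).
    apply Rmult_le_compat_r. left; apply Rinv_0_lt_compat; auto. auto.
    right. field. lra. }
  assert (HX2 : Rabs (beta * (INR k + 1) / (INR k + 2) * XN k (c j) b cc) <=
      Rabs beta * C * (1 + K/h) / h * (h * a^2 + h * b^2 + h * cc^2 + h * d^2)).
  { pose proof (XN_bound k (c j) b cc C (K/h) Hk (Hc _) (Hz _) (Hz _)).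
    replace (beta * (INR k + 1) / (INR k + 2) * XN k (c j) b cc) with
      (beta * ((INR k + 1) / (INR k + 2) * XN k (c j) b cc)) by (unfold Rdiv; ring).
    rewrite Rabs_mult, Rabs_mult.
    assert (Hkap : 0 <= (INR k + 1) / (INR k + 2) <= 1).
    { pose proof (pos_INR k). split. apply Rdiv_le_0_compat; lra.
      apply Rmult_le_reg_r with (INR k + 2). lra. unfold Rdiv. rewrite Rmult_assoc, Rinv_l by lra. lra. }
    rewrite (Rabs_right ((INR k + 1) / (INR k + 2))) by lra.
    assert (0 <= K/h) by (apply Rdiv_le_0_compat; lra).
    assert (Hxn : (INR k + 1) / (INR k + 2) * Rabs (XN k (c j) b cc) <= C * (1 + K/h) * (b^2 + cc^2)).
    { apply Rle_trans with (1 * Rabs (XN k (c j) b cc)). apply Rmult_le_compat_r. apply Rabs_pos. lra. lra. }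
    replace (Rabs beta * C * (1 + K / h) / h * (h * a ^ 2 + h * b ^ 2 + h * cc ^ 2 + h * d ^ 2))
      with (Rabs beta * (C * (1 + K/h) * (a^2 + b^2 + cc^2 + d^2))) by (field; lra).
    apply Rmult_le_compat_l. apply Rabs_pos.
    assert (0 <= C * (1 + K/h)) by (apply Rmult_le_pos; lra).
    assert (0 <= C * (1 + K/h) * a^2) by (apply Rmult_le_pos; lra).
    assert (0 <= C * (1 + K/h) * d^2) by (apply Rmult_le_pos; lra). nra. }
  lra.
Qed.

Section Time.
Variables (k : nat) (beta h T : R) (phi : gridfun) (u u' : R -> gridfun) (M : R).
Hypotheses (Hk : k = 1%nat \/ k = 2%nat) (Hh : 0 < h) (HT : 0 < T) (Hphi : is_l2 h phi)
  (HM : l2norm h phi = M) (Hsol : is_solution k beta h T phi u u').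

Definition vv (t : R) (j : Z) : R := u (clamp T t) j.

Lemma vv_cont j x : continuity_pt (fun t => vv t j) x.
Proof. unfold vv. apply (clamp_cont k beta h T phi u u'); auto. Qed.

Lemma vv_cont' : forall j x, continuity_pt (fun t => vv t j) x.
Proof. exact vv_cont. Qed.

Lemma vv_deriv j x : 0 < x < T -> derivable_pt_lim (fun t => vv t j) x (u' x j).
Proof. intros. unfold vv. apply (clamp_deriv k beta h T phi u u'); auto. Qed.

Lemma vv_eq j x : 0 < x < T -> u' x j = - Fop k beta h (vv x) j.
Proof.
  intros Hx. destruct Hsol as [_ [_ [_ [_ Heq]]]].
  specialize (Heq x ltac:(lra) j).
  unfold vv. rewrite clamp_id by lra.
  replace (fun j0 => u x j0) with (u x) by reflexivity. lra.
Qed.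

Lemma vv0 : vv 0 = phi.
Proof.
  unfold vv. rewrite clamp_id by lra. destruct Hsol as [H0 _]. rewrite H0. reflexivity.
Qed.

Lemma Msq : 0 <= M /\ M^2 = Series (l2t h phi).
Proof.
  rewrite <- HM. split. unfold l2norm; apply sqrt_pos. apply l2norm_sq; auto; lra.
Qed.

Lemma phi_window lo n : sZ lo n (fun j => h * phi j ^ 2) <= M^2.
Proof. destruct Msq as [_ ->]. apply window_le_series; auto; lra. Qed.

Lemma vv_K : exists K, forall t lo n, sZ lo n (fun j => h * vv t j ^ 2) <= K.
Proof.
  destruct (unif_bound k beta h T phi u u' Hh HT Hsol) as [K HK].
  exists K. intros t lo n. unfold vv. apply HK. apply clamp_in. lra.
Qed.

Lemma energy (c : Z -> R) lo n t1 : 0 < t1 <= T ->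
  sZ lo n (fun j => h * c j * vv t1 j ^ 2) - sZ lo n (fun j => h * c j * vv 0 j ^ 2) =
  -2 * RInt (fun t => sZ lo n (fun j => h * c j * vv t j * Fop k beta h (vv t) j)) 0 t1.
Proof.
  intros Ht1.
  apply (time_identity vv u' (fun j => h * c j)
    (fun t => sZ lo n (fun j => h * c j * vv t j * Fop k beta h (vv t) j)) lo n t1).
  - lra.
  - exact vv_cont'.
  - intros j x Hx. apply vv_deriv. lra.
  - intro x. cont vv_cont'.
  - intros x Hx. rewrite <- sZ_scal. apply sZ_ext. intros j _.
    rewrite vv_eq by lra. ring.
Qed.

Lemma pigeon (X : R -> Z -> R) Cb K t1 : 0 < t1 -> 0 <= Cb ->
  (forall j x, continuity_pt (fun t => X t j) x) ->
  (forall t j, Rabs (X t j) <= Cb * sZ (j + -2) 4 (fun i => h * vv t i ^ 2)) ->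
  (forall t lo n, sZ lo n (fun j => h * vv t j ^ 2) <= K) ->
  forall eps, 0 < eps -> forall j0,
  (exists j, (j0 <= j)%Z /\ RInt (fun t => Rabs (X t j)) 0 t1 <= eps) /\
  (exists j, (j <= j0)%Z /\ RInt (fun t => Rabs (X t j)) 0 t1 <= eps).
Proof.
  intros Ht1 HCb HX HB HK eps Heps j0.
  assert (HK0 : 0 <= K) by (eapply Rle_trans; [|apply (HK 0 0%Z 0%nat)]; simpl; lra).
  set (A := 4 * Cb * K * t1).
  assert (HA : 0 <= A) by (unfold A; repeat apply Rmult_le_pos; lra).
  destruct (archimed (A / eps)) as [Ar _].
  set (m := S (Z.to_nat (up (A / eps)))).
  assert (Hm : A / INR m <= eps).
  { unfold m. rewrite S_INR, INR_IZR_INZ.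
    assert (0 <= A / eps) by (apply Rdiv_le_0_compat; lra).
    assert (Hup : (0 <= up (A/eps))%Z) by (apply le_IZR; lra).
    rewrite Z2Nat.id by auto.
    apply Rmult_le_reg_r with (IZR (up (A / eps)) + 1). lra.
    unfold Rdiv. rewrite Rmult_assoc, Rinv_l by lra.
    apply Rmult_le_reg_r with (/eps). apply Rinv_0_lt_compat; lra.
    replace (eps * (IZR (up (A * / eps)) + 1) * / eps) with (IZR (up (A * / eps)) + 1) by (field; lra).
    unfold Rdiv in Ar. lra. }
  assert (Hcont : forall j x, continuity_pt (fun t => Rabs (X t j)) x) by (intros; apply cpt_abs; auto).
  assert (Hsum : forall lo, sZ lo m (fun j => RInt (fun t => Rabs (X t j)) 0 t1) <= A).
  { intro lo. rewrite <- RI_sZ by auto.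
    apply Rle_trans with (RInt (fun _ => Cb * (4 * K)) 0 t1).
    - apply RI_le. lra. intro x. apply (sZ_cont lo m (fun t j => Rabs (X t j))). auto. intros; apply cpt_const.
      intros t _. apply Rle_trans with (sZ lo m (fun j => Cb * sZ (j + -2) 4 (fun i => h * vv t i ^ 2))).
      apply sZ_le. intros; apply HB.
      rewrite sZ_scal. apply Rmult_le_compat_l; auto. apply sZ_window4. apply HK.
    - rewrite RI_const. unfold A. lra. }
  split.
  - destruct (sZ_avg j0 m _ A ltac:(unfold m; lia) (Hsum j0)) as [j [Hj1 Hj2]].
    exists j. split. lia. lra.
  - destruct (sZ_avg (j0 - Z.of_nat m + 1) m _ A ltac:(unfold m; lia) (Hsum _)) as [j [Hj1 Hj2]].
    exists j. split. lia. lra.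
Qed.

Lemma vv_idem t : vv (clamp T t) = vv t.
Proof.
  apply FunctionalExtensionality.functional_extensionality. intro j. unfold vv.
  rewrite (clamp_id T (clamp T t)). auto. apply clamp_in; lra.
Qed.

Lemma L2bound : forall t lo n, sZ lo n (fun j => h * vv t j ^ 2) <= M^2.
Proof.
  destruct vv_K as [K HK].
  assert (HK0 : 0 <= K) by (eapply Rle_trans; [|apply (HK 0 0%Z 0%nat)]; simpl; lra).
  intros t lo' n'. rewrite <- vv_idem. set (t1 := clamp T t).
  assert (Ht1 : 0 <= t1 <= T) by (apply clamp_in; lra).
  destruct (Req_dec t1 0) as [E0|E0].
  { rewrite E0, vv0. apply phi_window. }
  apply le_epsilon. intros eps Heps.
  set (X := fun t j => X1z k beta h (vv t) j).
  set (Cb := 5 / h^3 + Rabs beta * (1 + K/h) / h).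
  assert (HCb : 0 <= Cb).
  { unfold Cb. assert (0 < h^3) by (apply pow_lt; auto). pose proof (Rabs_pos beta).
    assert (0 <= K/h) by (apply Rdiv_le_0_compat; lra).
    assert (0 <= 5 / h^3) by (apply Rdiv_le_0_compat; lra).
    assert (0 <= Rabs beta * (1 + K/h) / h) by (apply Rdiv_le_0_compat; [apply Rmult_le_pos|]; lra). lra. }
  assert (HXc : forall j x, continuity_pt (fun t => X t j) x).
  { intros j x. unfold X, X1z, XL1, XN. cont vv_cont'. }
  assert (HXb : forall t j, Rabs (X t j) <= Cb * sZ (j + -2) 4 (fun i => h * vv t i ^ 2)).
  { intros. unfold X, Cb. apply X1z_bound; auto. }
  destruct (pigeon X Cb K t1 ltac:(lra) HCb HXc HXb HK (eps/4) ltac:(lra) (lo' + Z.of_nat n')%Z)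
    as [[hi [Hhi Ihi]] _].
  destruct (pigeon X Cb K t1 ltac:(lra) HCb HXc HXb HK (eps/4) ltac:(lra) lo')
    as [_ [lo [Hlo Ilo]]].
  set (n := Z.to_nat (hi - lo)).
  assert (Hn : (lo + Z.of_nat n)%Z = hi) by (unfold n; lia).
  apply Rle_trans with (sZ lo n (fun j => h * vv t1 j ^ 2)).
  { apply sZ_sub_le; auto. intros; apply Rmult_le_pos; [lra|apply pow2_ge_0]. lia. }
  assert (HE := energy (fun _ => 1) lo n t1 ltac:(lra)).
  rewrite vv0 in HE.
  rewrite (sZ_ext _ _ (fun j => h * 1 * vv t1 j ^ 2) (fun j => h * vv t1 j ^ 2)) in HE by (intros; ring).
  rewrite (sZ_ext _ _ (fun j => h * 1 * phi j ^ 2) (fun j => h * phi j ^ 2)) in HE by (intros; ring).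
  set (A := fun t => sZ lo n (fun j => (vv t (j+1)%Z - 2 * vv t j + vv t (j + -1)%Z)^2 / h^2)).
  assert (HG : (fun t => sZ lo n (fun j => h * 1 * vv t j * Fop k beta h (vv t) j)) =
     (fun t => A t + X t hi - X t lo)).
  { apply FunctionalExtensionality.functional_extensionality. intro t0.
    unfold A, X. rewrite sum_identity1 by lra. rewrite Hn. reflexivity. }
  rewrite HG in HE.
  assert (HAc : forall x, continuity_pt A x) by (intro; unfold A; cont vv_cont').
  assert (HI : RInt (fun t => A t + X t hi - X t lo) 0 t1 =
    RInt A 0 t1 + RInt (fun t => X t hi) 0 t1 - RInt (fun t => X t lo) 0 t1).
  { assert (E1 : ex_RInt A 0 t1) by (apply RInt_cont_ex; auto).
    assert (E2 : ex_RInt (fun t => X t hi) 0 t1) by (apply RInt_cont_ex; apply HXc).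
    assert (E3 : ex_RInt (fun t => X t lo) 0 t1) by (apply RInt_cont_ex; apply HXc).
    assert (E4 : ex_RInt (fun t => A t + X t hi) 0 t1).
    { apply RInt_cont_ex. intro x. apply (cpt_plus A (fun t => X t hi)); auto. }
    rewrite (RI_minus (fun t => A t + X t hi) (fun t => X t lo) 0 t1 E4 E3).
    rewrite (RI_plus A (fun t => X t hi) 0 t1 E1 E2). reflexivity. }
  rewrite HI in HE.
  assert (HA0 : 0 <= RInt A 0 t1).
  { apply Rle_trans with (RInt (fun _ => 0) 0 t1). rewrite RI_const. lra.
    apply RI_le. lra. intro; apply cpt_const. auto.
    intros x _. unfold A. apply sZ_nonneg. intros. apply Rdiv_le_0_compat. apply pow2_ge_0.
    apply pow_lt; auto. }
  pose proof (RI_abs (fun t => X t hi) 0 t1 ltac:(lra) (HXc hi)).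
  pose proof (RI_abs (fun t => X t lo) 0 t1 ltac:(lra) (HXc lo)).
  assert (RInt (fun t => X t lo) 0 t1 <= RInt (fun t => Rabs (X t lo)) 0 t1).
  { apply RI_le. lra. apply HXc. intro; apply cpt_abs; apply HXc. intros; apply Rle_abs. }
  pose proof (phi_window lo n).
  lra.
Qed.

Lemma vv_int t : 0 < t < T -> vv t = u t.
Proof. intros. apply FunctionalExtensionality.functional_extensionality; intro j. unfold vv. rewrite clamp_id; auto; lra. Qed.

Definition Cmain (Rr : R) := 2 * (2 * (Rr + 3) + 3) * M^2 + 4 * T * Cst0 beta M + 2.

Lemma main_small (Rr : R) : 0 < Rr -> h <= 1 ->
  RInt (fun t => local_sum h Rr (Dp h (u t))) 0 T <= Cmain Rr /\
  RInt (fun t => local_sum h Rr (Dm h (u t))) 0 T <= Cmain Rr.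
Proof.
  intros HR Hh1.
  destruct vv_K as [K HK].
  assert (HK0 : 0 <= K) by (eapply Rle_trans; [|apply (HK 0 0%Z 0%nat)]; simpl; lra).
  destruct Msq as [HM0 _].
  set (rho := Rr + 3). assert (Hrho : 0 < rho) by (unfold rho; lra).
  set (c := psi rho h).
  set (C := 2 * rho + 3).
  assert (HC : 0 <= C) by (unfold C; lra).
  assert (Hc : forall i, Rabs (c i) <= C).
  { intro i. pose proof (psi_bounds rho h i Hrho Hh Hh1). unfold c. rewrite Rabs_right by lra. unfold C; lra. }
  set (X := fun t j => Xmz k beta h c (vv t) j).
  set (Cb := (10 * C + 8 * h^2) / h^3 + Rabs beta * C * (1 + K/h) / h).
  assert (HCb : 0 <= Cb).
  { unfold Cb. assert (0 < h^3) by (apply pow_lt; auto). pose proof (Rabs_pos beta).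
    assert (0 <= K/h) by (apply Rdiv_le_0_compat; lra).
    assert (0 <= h^2) by apply pow2_ge_0.
    assert (0 <= (10 * C + 8 * h^2) / h^3) by (apply Rdiv_le_0_compat; lra).
    assert (0 <= Rabs beta * C * (1 + K/h) / h).
    { apply Rdiv_le_0_compat; [|lra]. apply Rmult_le_pos; [apply Rmult_le_pos|]; lra. }
    lra. }
  assert (HXc : forall j x, continuity_pt (fun t => X t j) x).
  { intros j x. unfold X, Xmz, XLj, XNj, XL, XN. cont vv_cont'. }
  assert (HXb : forall t j, Rabs (X t j) <= Cb * sZ (j + -2) 4 (fun i => h * vv t i ^ 2)).
  { intros. unfold X, Cb. apply Xmz_bound; auto. }
  set (K1 := Z.of_nat (Z.to_nat (up (Rr / h)))).
  destruct (pigeon X Cb K T HT HCb HXc HXb HK (1/4) ltac:(lra) (Z.of_nat (n0 rho h) + K1 + 1)%Z)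
    as [[hi [Hhi Ihi]] _].
  destruct (pigeon X Cb K T HT HCb HXc HXb HK (1/4) ltac:(lra) (lo0 rho h - K1 - 2)%Z)
    as [_ [lo [Hlo Ilo]]].
  assert (HK1 : (0 <= K1)%Z) by (unfold K1; lia).
  assert (Hn0 : (0 <= lo0 rho h)%Z -> False) by (unfold lo0; intro; pose proof (n0_bounds rho h Hrho Hh) as [B _];
     assert (0 < INR (n0 rho h)) by nra; assert (0 < n0 rho h)%nat by (apply INR_lt; simpl; lra); lia).
  set (n := Z.to_nat (hi - lo)).
  assert (Hn : (lo + Z.of_nat n)%Z = hi) by (unfold n, lo0 in *; lia).
  assert (HE := energy c lo n T ltac:(lra)).
  rewrite vv0 in HE.
  set (G := fun t => sZ lo n (fun j => h * c j * vv t j * Fop k beta h (vv t) j)) in HE.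
  assert (HGc : forall x, continuity_pt G x) by (intro; unfold G; cont vv_cont').
  set (P := fun t => Pw h rho (vv t) lo n).
  assert (HPc : forall x, continuity_pt P x) by (intro; unfold P, Pw, Dp; cont vv_cont').
  assert (HGlow : forall t, G t >= /4 * P t - Cst0 beta M + (X t hi - X t lo)).
  { intro t. unfold G, P, X.
    assert (Hpt := per_time k beta h rho M (vv t) Hk Hh Hh1 Hrho HM0 (L2bound t) lo n).
    fold c in Hpt. 
    assert (Hbd : bd k beta h rho (vv t) lo n = Xmz k beta h c (vv t) hi - Xmz k beta h c (vv t) lo).
    { unfold bd, Xmz. rewrite Hn. fold c. unfold Rdiv. ring. }
    rewrite Hbd in Hpt. apply Hpt; unfold lo0 in *; lia. }
  assert (HI1 : RInt (fun t => /4 * P t - Cst0 beta M + (X t hi - X t lo)) 0 T <= RInt G 0 T).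
  { apply RI_le. lra. intro x. cont HXc. apply HGc. intros t _. apply Rge_le, HGlow. }
  assert (HI2 : RInt (fun t => /4 * P t - Cst0 beta M + (X t hi - X t lo)) 0 T =
     /4 * RInt P 0 T - T * Cst0 beta M + (RInt (fun t => X t hi) 0 T - RInt (fun t => X t lo) 0 T)).
  { assert (E1 : ex_RInt P 0 T) by (apply RInt_cont_ex; auto).
    assert (E2 : ex_RInt (fun t => X t hi) 0 T) by (apply RInt_cont_ex; apply HXc).
    assert (E3 : ex_RInt (fun t => X t lo) 0 T) by (apply RInt_cont_ex; apply HXc).
    assert (E4 : ex_RInt (fun t => /4 * P t) 0 T).
    { apply RInt_cont_ex. intro. apply (cpt_mult (fun _ => /4) P). apply cpt_const. auto. }
    assert (E5 : ex_RInt (fun t => /4 * P t - Cst0 beta M) 0 T).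
    { apply RInt_cont_ex. intro. apply (cpt_minus (fun t => /4 * P t) (fun _ => Cst0 beta M)).
      apply (cpt_mult (fun _ => /4) P). apply cpt_const. auto. apply cpt_const. }
    assert (E6 : ex_RInt (fun t => X t hi - X t lo) 0 T).
    { apply RInt_cont_ex. intro. apply (cpt_minus (fun t => X t hi) (fun t => X t lo)); apply HXc. }
    assert (E7 : ex_RInt (fun _ => Cst0 beta M) 0 T) by (apply RInt_cont_ex; intro; apply cpt_const).
    rewrite (RI_plus _ _ 0 T E5 E6). rewrite (RI_minus _ _ 0 T E4 E7).
    rewrite (RI_minus _ _ 0 T E2 E3). rewrite (RI_scal P 0 T (/4) E1). rewrite RI_const.
    replace (T - 0) with T by ring. reflexivity. }
  pose proof (RI_abs (fun t => X t hi) 0 T ltac:(lra) (HXc hi)).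
  assert (RInt (fun t => X t lo) 0 T <= RInt (fun t => Rabs (X t lo)) 0 T).
  { apply RI_le. lra. apply HXc. intro; apply cpt_abs; apply HXc. intros; apply Rle_abs. }
  assert (HET : 0 <= sZ lo n (fun j => h * c j * vv T j ^ 2)).
  { apply sZ_nonneg. intros. apply Rmult_le_pos. apply Rmult_le_pos. lra.
    pose proof (psi_bounds rho h j Hrho Hh Hh1). unfold c; lra. apply pow2_ge_0. }
  assert (HE0 : sZ lo n (fun j => h * c j * phi j ^ 2) <= C * M^2).
  { apply Rle_trans with (sZ lo n (fun j => C * (h * phi j ^ 2))).
    - apply sZ_le. intros j _. pose proof (psi_bounds rho h j Hrho Hh Hh1).
      assert (0 <= h * phi j ^ 2) by (apply Rmult_le_pos; [lra|apply pow2_ge_0]).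
      unfold c. unfold C. nra.
    - rewrite sZ_scal. apply Rmult_le_compat_l; auto. apply phi_window. }
  assert (HPint : RInt P 0 T <= Cmain Rr).
  { unfold Cmain. fold rho. unfold C in HE0. lra. }
  split.
  - apply Rle_trans with (RInt P 0 T); auto.
    rewrite (RInt_ext _ (fun t => local_sum h Rr (Dp h (vv t)))).
    2: { intros x Hx. rewrite Rmin_left, Rmax_right in Hx by lra. rewrite vv_int; auto. }
    apply RI_le. lra. intro. apply (cont_local_sum h Rr (fun t => Dp h (vv t))). intros; unfold Dp; cont vv_cont'. auto.
    intros t _. unfold P. apply local_sum_Dp; auto; unfold K1, lo0 in *; lia.
  - apply Rle_trans with (RInt P 0 T); auto.
    rewrite (RInt_ext _ (fun t => local_sum h Rr (Dm h (vv t)))).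
    2: { intros x Hx. rewrite Rmin_left, Rmax_right in Hx by lra. rewrite vv_int; auto. }
    apply RI_le. lra. intro. apply (cont_local_sum h Rr (fun t => Dm h (vv t))). intros; unfold Dm; cont vv_cont'. auto.
    intros t _. unfold P. apply local_sum_Dm; auto; unfold K1, lo0 in *; lia.
Qed.

Lemma main_large (Rr : R) : 1 < h ->
  RInt (fun t => local_sum h Rr (Dp h (u t))) 0 T <= 4 * M^2 * T /\
  RInt (fun t => local_sum h Rr (Dm h (u t))) 0 T <= 4 * M^2 * T.
Proof.
  intros Hh1.
  assert (Hloc : forall (w : Z -> R) t, (forall j, h * w j ^ 2 <= 2 * (h * vv t (j+1)%Z ^ 2) + 2 * (h * vv t j ^ 2)) \/
      (forall j, h * w j ^ 2 <= 2 * (h * vv t j ^ 2) + 2 * (h * vv t (j + -1)%Z ^ 2)) ->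
      local_sum h Rr w <= 4 * M^2).
  { intros w t Hw. rewrite local_sum_eq.
    set (lo := (- Z.of_nat (Z.to_nat (up (Rr / h))) - 1)%Z). set (n := (2 * Z.to_nat (up (Rr / h)) + 2)%nat).
    assert (Hnn : forall j, 0 <= h * vv t j ^ 2) by (intro; apply Rmult_le_pos; [lra|apply pow2_ge_0]).
    destruct Hw as [Hw|Hw].
    - apply Rle_trans with (sZ lo n (fun j => 2 * (h * vv t (j+1)%Z ^ 2) + 2 * (h * vv t j ^ 2))).
      + apply sZ_le. intros j _. destruct Rle_dec. apply Hw. pose proof (Hnn j). pose proof (Hnn (j+1)%Z). lra.
      + rewrite sZ_plus, (sZ_scal _ _ 2 (fun j => h * vv t (j+1)%Z ^ 2)), (sZ_scal _ _ 2 (fun j => h * vv t j ^ 2)).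
        rewrite (sZ_shift lo n 1 (fun j => h * vv t j ^ 2)).
        pose proof (L2bound t (lo+1)%Z n). pose proof (L2bound t lo n). lra.
    - apply Rle_trans with (sZ lo n (fun j => 2 * (h * vv t j ^ 2) + 2 * (h * vv t (j + -1)%Z ^ 2))).
      + apply sZ_le. intros j _. destruct Rle_dec. apply Hw. pose proof (Hnn j). pose proof (Hnn (j + -1)%Z). lra.
      + rewrite sZ_plus, (sZ_scal _ _ 2 (fun j => h * vv t j ^ 2)), (sZ_scal _ _ 2 (fun j => h * vv t (j + -1)%Z ^ 2)).
        rewrite (sZ_shift lo n (-1) (fun j => h * vv t j ^ 2)).
        pose proof (L2bound t (lo + -1)%Z n). pose proof (L2bound t lo n). lra. }
  assert (Hab : forall a b, h * ((a - b) / h) ^ 2 <= 2 * (h * a^2) + 2 * (h * b^2)).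
  { intros a b. replace (h * ((a - b) / h) ^ 2) with ((a-b)^2 / h) by (field; lra).
    assert (0 <= (a+b)^2) by apply pow2_ge_0.
    assert ((a-b)^2 <= 2*a^2 + 2*b^2) by nra.
    assert (0 <= a^2) by apply pow2_ge_0. assert (0 <= b^2) by apply pow2_ge_0.
    apply Rmult_le_reg_r with h. lra. unfold Rdiv. rewrite Rmult_assoc, Rinv_l, Rmult_1_r by lra. assert (1 <= h*h) by nra. assert (2*a^2+2*b^2 <= (2*a^2+2*b^2)*(h*h)) by nra. nra. }
  split.
  - rewrite (RInt_ext _ (fun t => local_sum h Rr (Dp h (vv t)))).
    2: { intros x Hx. rewrite Rmin_left, Rmax_right in Hx by lra. rewrite vv_int; auto. }
    apply Rle_trans with (RInt (fun _ => 4 * M^2) 0 T).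
    + apply RI_le. lra. intro. apply (cont_local_sum h Rr (fun t => Dp h (vv t))). intros; unfold Dp; cont vv_cont'.
      intro; apply cpt_const.
      intros t _. apply (Hloc _ t). left. intro j. unfold Dp. apply Hab.
    + rewrite RI_const. lra.
  - rewrite (RInt_ext _ (fun t => local_sum h Rr (Dm h (vv t)))).
    2: { intros x Hx. rewrite Rmin_left, Rmax_right in Hx by lra. rewrite vv_int; auto. }
    apply Rle_trans with (RInt (fun _ => 4 * M^2) 0 T).
    + apply RI_le. lra. intro. apply (cont_local_sum h Rr (fun t => Dm h (vv t))). intros; unfold Dm; cont vv_cont'.
      intro; apply cpt_const.
      intros t _. apply (Hloc _ t). right. intro j. unfold Dm. replace (j - 1)%Z with (j + -1)%Z by ring. apply Hab.
    + rewrite RI_const. lra.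
Qed.
End Time.

Theorem proposition3p7 :
  forall (k : nat) (beta : R), (k = 1%nat \/ k = 2%nat) -> beta <> 0 ->
  forall (T Rr : R), 0 < T -> 0 < Rr ->
  forall M : R,
  exists C : R,
    forall (h : R) (phi : gridfun), 0 < h ->
      is_l2 h phi -> l2norm h phi = M ->
      forall u u' : R -> gridfun, is_solution k beta h T phi u u' ->
        RInt (fun t => local_sum h Rr (Dp h (u t))) 0 T <= C /\
        RInt (fun t => local_sum h Rr (Dm h (u t))) 0 T <= C.
Proof.
  intros k beta Hk _ T Rr HT HR M.
  exists (Rmax (4 * M^2 * T) (Cmain beta T M Rr)).
  intros h phi Hh Hphi HM u u' Hsol.
  destruct (Rle_lt_dec h 1) as [H1|H1].
  - destruct (main_small k beta h T phi u u' M Hk Hh HT Hphi HM Hsol Rr HR H1) as [A B].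
    pose proof (Rmax_r (4 * M^2 * T) (Cmain beta T M Rr)). split; lra.
  - destruct (main_large k beta h T phi u u' M Hk Hh HT Hphi HM Hsol Rr H1) as [A B].
    pose proof (Rmax_l (4 * M^2 * T) (Cmain beta T M Rr)). split; lra.
Qed.
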